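(* Let $F$ be a nondyadic nonarchimedean local field with uniformizer $\pi$, maximal ideal $\mathfrak p$ and residue field $\mathfrak k$, and $A$ a quaternion $F$-algebra. Put $\varepsilon=0$ if $A$ is split, and if $A$ is ramified let $\varepsilon\in O_F^\times$ be such that $1-4\varepsilon\in O_F^\times\setminus O_F^{\times2}$. Let $\{1,x_1,x_2,x_3\}$ be an $F$-basis of $A$ with $x_1^2=x_1-\varepsilon$, $x_2^2=\pi$, $x_2x_1=(1-x_1)x_2$, $x_3=x_1x_2$. Let $n\ge3$, $r=\lfloor n/2\rfloor$, $s=\lfloor (n-1)/2\rfloor$, $\alpha\in\mathfrak p$, $\beta\in O_F$ (with $1+\beta\in O_F^\times$ if $A$ is split), $x_{\alpha\beta}=\alpha x_1+x_2+\beta x_3$, and $\mathcal O=O_F+O_Fx_{\alpha\beta}+O_F\pi^rx_1+O_F\pi^sx_3$ (a Bass order with Eichler invariant $0$ and $n(\mathcal O)=n$). Put $M=F(x_{\alpha\beta})$. Then $\mathrm{Nr}(\mathcal N(\mathcal O))=\mathrm{Nm}_{M/F}(M^\times)$ if and only if either (i) $A$ is split and $-1\in\mathfrak k^{\times2}$, or (ii) $A$ is ramified and $-1\notin\mathfrak k^{\times2}$.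
   Context: $\mathcal N(\mathcal O)$ is the normalizer of $\mathcal O$ in $A^\times$, $\mathrm{Nr}$ the reduced norm, $\mathrm{Nm}_{M/F}$ the field norm. Nondyadic means residue characteristic $\ne2$. *)

(* Defs.v *)
From mathcomp Require Import all_boot all_order all_algebra.
Set Implicit Arguments. Unset Strict Implicit. Unset Printing Implicit Defensive.
Import Order.TTheory GRing.Theory Num.Theory.
Local Open Scope ring_scope.

(* Nonarchimedean local fields, given by a normalized discrete         *)
(* valuation v : F -> int (only its values on nonzero elements matter). *)
Section Valuation.
Variables (F : fieldType) (v : F -> int).

Definition vint (x : F) : Prop := x = 0 \/ 0 <= v x.
Definition vmax (x : F) : Prop := x = 0 \/ 0 < v x.
Definition vunit (x : F) : Prop := x != 0 /\ v x = 0.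

Definition vcauchy (u : nat -> F) : Prop :=
  forall N : int, exists K : nat, forall m k : nat, (K <= m)%N -> (K <= k)%N ->
    u m - u k = 0 \/ N <= v (u m - u k).
Definition vconverges (u : nat -> F) (l : F) : Prop :=
  forall N : int, exists K : nat, forall m : nat, (K <= m)%N ->
    u m - l = 0 \/ N <= v (u m - l).

Record nondyadic_local_field : Prop := {
  v_mul : forall x y, x != 0 -> y != 0 -> v (x * y) = v x + v y;
  v_add : forall x y, x != 0 -> y != 0 -> x + y != 0 ->
            (v x <= v (x + y)) || (v y <= v (x + y));
  v_normalized : exists p : F, p != 0 /\ v p = 1;
  v_complete : forall u, vcauchy u -> exists l, vconverges u l;
  v_residue_finite : exists s : seq F, (forall y, y \in s -> vint y) /\
            (forall x, vint x -> exists2 y, y \in s & vmax (x - y));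
  v_nondyadic : vunit 2
}.

(* -1 is a square in the residue field k (then automatically in k^x) *)
Definition minus1_sq_residue : Prop := exists u : F, vint u /\ vmax (u ^+ 2 + 1).

End Valuation.

(* The quaternion algebra A with F-basis {1, x1, x2, x3} and           *)
(*   x1^2 = x1 - eps, x2^2 = pi, x2 x1 = (1 - x1) x2, x3 = x1 x2.       *)
(* Element Quat a0 a1 a2 a3 stands for a0 + a1 x1 + a2 x2 + a3 x3.      *)
(* Writing K = F + F x1, an element is u + w x2 with u = a0 + a1 x1,    *)
(* w = a2 + a3 x1, and x2 k = kbar x2 for k in K.                       *)
Record quat (F : Type) := Quat { q0 : F; q1 : F; q2 : F; q3 : F }.

Section Quaternion.
Variables (F : fieldType) (eps pi : F).

(* arithmetic in K = F[x1]/(x1^2 - x1 + eps), pairs (a,b) = a + b x1 *)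
Definition Kmul (p q : F * F) : F * F :=
  (p.1 * q.1 - eps * (p.2 * q.2), p.1 * q.2 + p.2 * q.1 + p.2 * q.2).
Definition Kconj (p : F * F) : F * F := (p.1 + p.2, - p.2).
Definition Kadd (p q : F * F) : F * F := (p.1 + q.1, p.2 + q.2).
Definition Kscale (c : F) (p : F * F) : F * F := (c * p.1, c * p.2).

Definition qadd (x y : quat F) : quat F :=
  Quat (q0 x + q0 y) (q1 x + q1 y) (q2 x + q2 y) (q3 x + q3 y).
Definition qscale (c : F) (x : quat F) : quat F :=
  Quat (c * q0 x) (c * q1 x) (c * q2 x) (c * q3 x).
Definition qs (c : F) : quat F := Quat c 0 0 0.
Definition qone : quat F := qs 1.
Definition qx1 : quat F := Quat 0 1 0 0.
Definition qx2 : quat F := Quat 0 0 1 0.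
Definition qx3 : quat F := Quat 0 0 0 1.

(* (u + w x2)(u' + w' x2) = (u u' + pi w w'bar) + (w u'bar + u w') x2 *)
Definition qmul (x y : quat F) : quat F :=
  let u := (q0 x, q1 x) in let w := (q2 x, q3 x) in
  let u' := (q0 y, q1 y) in let w' := (q2 y, q3 y) in
  let a := Kadd (Kmul u u') (Kscale pi (Kmul w (Kconj w'))) in
  let b := Kadd (Kmul w (Kconj u')) (Kmul u w') in
  Quat a.1 a.2 b.1 b.2.

(* standard involution: 1 -> 1, x1 -> 1 - x1, x2 -> -x2, x3 -> -x3 *)
Definition qconj (x : quat F) : quat F :=
  Quat (q0 x + q1 x) (- q1 x) (- q2 x) (- q3 x).

Definition Nr (x : quat F) : F := q0 (qmul x (qconj x)).
Definition Trd (x : quat F) : F := q0 (qadd x (qconj x)).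

End Quaternion.

Section Order_.
Variables (F : fieldType) (v : F -> int) (eps pi alpha beta : F) (n : nat).

Definition xab : quat F := Quat 0 alpha 1 beta.

Definition inO (y : quat F) : Prop :=
  exists c0 c1 c2 c3 : F, [/\ vint v c0, vint v c1, vint v c2 & vint v c3] /\
    y = qadd (qadd (qs c0) (qscale c1 xab))
             (qadd (qscale (c2 * pi ^+ n./2) (qx1 F))
                   (qscale (c3 * pi ^+ (n.-1)./2) (qx3 F))).

Definition inNormalizer (g : quat F) : Prop :=
  exists h : quat F,
    [/\ qmul eps pi g h = qone F, qmul eps pi h g = qone F &
        forall y, inO y <-> inO (qmul eps pi (qmul eps pi g y) h)].

Definition NrNormalizer (c : F) : Prop :=
  exists g, inNormalizer g /\ c = Nr eps pi g.

(* M = F(x_ab) = F + F x_ab inside A; x_ab has minimal polynomial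
   X^2 - Trd(x_ab) X + Nr(x_ab), and the field norm of a + b x_ab is the
   determinant of multiplication by it on the basis {1, x_ab}, namely
   a^2 + a b Trd(x_ab) + b^2 Nr(x_ab). *)
Definition NmM (a b : F) : F :=
  a ^+ 2 + a * b * Trd (xab) + b ^+ 2 * Nr eps pi xab.

Definition NmMunits (c : F) : Prop :=
  exists a b : F, (a != 0 \/ b != 0) /\ c = NmM a b.

End Order_.

(* Main.v *)
Require Import Defs.
From mathcomp Require Import all_boot all_order all_algebra.
From mathcomp Require Import ring lra zify.
From Stdlib Require Import ClassicalEpsilon.
Set Implicit Arguments. Unset Strict Implicit. Unset Printing Implicit Defensive.
Import Order.TTheory GRing.Theory Num.Theory.
Local Open Scope ring_scope.


Definition pb (P : Prop) : bool := if excluded_middle_informative P then true else false.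
Lemma pbP (P : Prop) : reflect P (pb P).
Proof. by rewrite /pb; case: excluded_middle_informative => h; constructor. Qed.

Section Val.
Variables (F : fieldType) (v : F -> int) (HF : nondyadic_local_field v).
Variable (pi : F).
Hypothesis Hpi : pi != 0 /\ v pi = 1.

Let vM := v_mul HF.

Lemma v1 : v 1 = 0.
Proof. have h : v 1 = v 1 + v 1 by rewrite -vM ?oner_neq0 // mulr1. lia. Qed.

Lemma vN1 : v (-1) = 0.
Proof.
have h1 : (-1 : F) != 0 by rewrite oppr_eq0 oner_neq0.
have h : v 1 = v (-1) + v (-1) by rewrite -vM // mulrNN mulr1.
rewrite v1 in h; lia.
Qed.

Lemma vN x : v (- x) = v x.
Proof.
have [->|nx] := eqVneq x 0; first by rewrite oppr0.
have h1 : (-1 : F) != 0 by rewrite oppr_eq0 oner_neq0.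
by rewrite -mulN1r vM // vN1 add0r.
Qed.

Lemma vV x : x != 0 -> v x^-1 = - v x.
Proof.
move=> nx; have h : v 1 = v x + v x^-1 by rewrite -vM ?invr_neq0 // mulfV.
rewrite v1 in h; lia.
Qed.

Lemma vX x k : x != 0 -> v (x ^+ k) = (v x *+ k).
Proof.
move=> nx; elim: k => [|k IH]; first by rewrite expr0 v1.
by rewrite exprS vM ?expf_neq0 // IH mulrS.
Qed.

Lemma vpiX k : v (pi ^+ k) = k%:Z.
Proof. rewrite vX ?Hpi.1 // Hpi.2; elim: k => [//|k IH]; rewrite mulrS IH; lia. Qed.

Lemma vadd x y : x != 0 -> y != 0 -> x + y != 0 ->
  (Order.min (v x) (v y) <= v (x + y)).
Proof.
move=> nx ny nxy; have := v_add HF nx ny nxy.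
by case/orP => h; rewrite ge_min h ?orbT.
Qed.

Lemma vint_pi : vint v pi. Proof. by right; rewrite (proj2 Hpi). Qed.
Lemma vint0 : vint v 0. Proof. by left. Qed.
Lemma vint1 : vint v 1. Proof. by right; rewrite v1. Qed.
Lemma vintN x : vint v x -> vint v (- x).
Proof. by case=> [->|h]; [left; rewrite oppr0|right; rewrite vN]. Qed.
Lemma vintD x y : vint v x -> vint v y -> vint v (x + y).
Proof.
case=> [->|hx]; first by rewrite add0r.
case=> [->|hy]; first by rewrite addr0 ; right.
have [->|nx] := eqVneq x 0; first by rewrite add0r; right.
have [->|ny] := eqVneq y 0; first by rewrite addr0; right.
have [->|nxy] := eqVneq (x + y) 0; first by left.
right; apply: le_trans (vadd nx ny nxy); by rewrite le_min hx hy.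
Qed.
Lemma vintB x y : vint v x -> vint v y -> vint v (x - y).
Proof. by move=> hx hy; apply: vintD => //; apply: vintN. Qed.
Lemma vintM x y : vint v x -> vint v y -> vint v (x * y).
Proof.
case=> [->|hx]; first by rewrite mul0r; left.
case=> [->|hy]; first by rewrite mulr0; left.
have [->|nx] := eqVneq x 0; first by rewrite mul0r; left.
have [->|ny] := eqVneq y 0; first by rewrite mulr0; left.
by right; rewrite vM // addr_ge0.
Qed.
Lemma vintX x k : vint v x -> vint v (x ^+ k).
Proof. move=> h; elim: k => [|k IH]; [exact: vint1| by rewrite exprS; apply: vintM]. Qed.
Lemma vintn k : vint v k%:R.
Proof. elim: k => [|k IH]; [exact: vint0| by rewrite -addn1 natrD; apply: vintD => //; apply: vint1]. Qed.

Lemma vunit_int x : vunit v x -> vint v x.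
Proof. by case=> _ h; right; rewrite h. Qed.
Lemma vunitV x : vunit v x -> vunit v x^-1.
Proof. by case=> nx h; split; [rewrite invr_eq0|rewrite vV // h oppr0]. Qed.
Lemma vunitV_int x : vunit v x -> vint v x^-1.
Proof. by move/vunitV/vunit_int. Qed.
Lemma vunitM x y : vunit v x -> vunit v y -> vunit v (x * y).
Proof. by case=> nx hx [ny hy]; split; [rewrite mulf_neq0|rewrite vM // hx hy]. Qed.
Lemma vunitN x : vunit v x -> vunit v (- x).
Proof. by case=> nx hx; split; [rewrite oppr_eq0|rewrite vN]. Qed.
Lemma vunit1 : vunit v 1. Proof. by split; [exact: oner_neq0|exact: v1]. Qed.
Lemma vunit2 : vunit v 2%:R. Proof. exact: v_nondyadic HF. Qed.
Lemma vint_half : vint v (2%:R)^-1. Proof. exact: vunitV_int vunit2. Qed.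

Lemma vmaxE x : vmax v x <-> vint v (x / pi).
Proof.
have np := Hpi.1.
split.
  case=> [->|h]; first by rewrite mul0r; left.
  have [->|nx] := eqVneq x 0; first by rewrite mul0r; left.
  by right; rewrite vM ?invr_neq0 // vV // Hpi.2; lia.
case=> h.
  by left; move: h => /eqP; rewrite mulf_eq0 invr_eq0 (negbTE np) orbF => /eqP.
have [->|nx] := eqVneq x 0; first by left.
by right; move: h; rewrite vM ?invr_neq0 // vV // Hpi.2; lia.
Qed.
Lemma vmax_pi y : vint v y -> vmax v (pi * y).
Proof. by move=> h; apply/vmaxE; rewrite mulrC mulKf ?Hpi.1. Qed.
Lemma vmaxP x : vmax v x -> exists2 y, vint v y & x = pi * y.
Proof. move/vmaxE=> h; exists (x / pi) => //; by rewrite mulrC mulfVK ?Hpi.1. Qed.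
Lemma vmax_int x : vmax v x -> vint v x.
Proof. by case=> [->|h]; [left|right; apply: ltW]. Qed.
Lemma vint_cases x : vint v x -> vmax v x \/ vunit v x.
Proof.
case=> [->|h]; first by left; left.
have [->|nx] := eqVneq x 0; first by left; left.
by move: h; rewrite le_eqVlt => /orP[/eqP h|h]; [right; split|left; right].
Qed.
Lemma not_max_unit x : vunit v x -> ~ vmax v x.
Proof. by case=> nx hx [h|h]; [move: nx; rewrite h eqxx|move: h; rewrite hx ltxx]. Qed.
Lemma unit_add_max x y : vunit v x -> vmax v y -> vunit v (x + y).
Proof.
move=> ux my; case: (my) => [->|hy]; first by rewrite addr0.
have [->|ny] := eqVneq y 0; first by rewrite addr0.
case: (ux) => nx hx.
have nxy : x + y != 0.
  apply/negP => /eqP h; have : y = - x by rewrite -(addKr x y) h addr0.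
  move=> e; move: hy; rewrite e vN hx ltxx //.
split => //.
have h1 := vadd nx ny nxy.
have : 0 <= v (x + y) by apply: le_trans h1; rewrite le_min hx lexx ltW.
rewrite le_eqVlt => /orP[/eqP<-//|h2].
have ny' : - y != 0 by rewrite oppr_eq0.
have := vadd nxy ny' ; rewrite addrK => /(_ nx); rewrite vN => h3.
by move: h3; rewrite hx ge_min !leNgt h2 hy.
Qed.
Lemma vmaxD x y : vmax v x -> vmax v y -> vmax v (x + y).
Proof. by move=> /vmaxE hx /vmaxE hy; apply/vmaxE; rewrite mulrDl; apply: vintD. Qed.
Lemma vmaxN x : vmax v x -> vmax v (- x).
Proof. by move=> /vmaxE hx; apply/vmaxE; rewrite mulNr; apply: vintN. Qed.
Lemma vmaxM x y : vint v x -> vmax v y -> vmax v (x * y).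
Proof. by move=> hx /vmaxE hy; apply/vmaxE; rewrite -mulrA; apply: vintM. Qed.
Lemma vmax0 : vmax v 0. Proof. by left. Qed.
Lemma not_max1 : ~ vmax v 1. Proof. exact: not_max_unit vunit1. Qed.

Lemma unit_of_int x : vint v x -> ~ vmax v x -> vunit v x.
Proof. by move=> /vint_cases[]. Qed.
Lemma max_prime x y : vint v x -> vint v y -> vmax v (x * y) -> vmax v x \/ vmax v y.
Proof.
move=> /vint_cases[hx|ux]; first by left.
move=> /vint_cases[hy|uy]; first by right.
by move=> h; exfalso; apply: (not_max_unit (vunitM ux uy)).
Qed.
Lemma vunit_sq x : vunit v (x ^+ 2) -> vunit v x.
Proof.
case=> nx hx; have nx0 : x != 0 by move: nx; rewrite expf_eq0.
by split => //; move: hx; rewrite vX //; lia.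
Qed.


Lemma piX_neq0 k : pi ^+ k != 0. Proof. by rewrite expf_neq0 ?Hpi.1. Qed.

Definition dv (k : nat) (x : F) := vint v (x / pi ^+ k).

Lemma dv_val k x : dv k x <-> (x = 0 \/ k%:Z <= v x).
Proof.
have np := piX_neq0 k.
rewrite /dv; split.
  case=> [h|h].
    by left; move: h => /eqP; rewrite mulf_eq0 invr_eq0 (negbTE np) orbF => /eqP.
  have [->|nx] := eqVneq x 0; first by left.
  by right; move: h; rewrite vM ?invr_neq0 // vV // vpiX; lia.
case=> [->|h]; first by rewrite mul0r; left.
have [->|nx] := eqVneq x 0; first by rewrite mul0r; left.
by right; rewrite vM ?invr_neq0 // vV // vpiX; lia.
Qed.

Lemma dvD k x y : dv k x -> dv k y -> dv k (x + y).
Proof. by rewrite /dv mulrDl; apply: vintD. Qed.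
Lemma dvN k x : dv k x -> dv k (- x).
Proof. by rewrite /dv mulNr; apply: vintN. Qed.
Lemma dvB k x y : dv k x -> dv k y -> dv k (x - y).
Proof. by move=> h1 h2; apply: dvD => //; apply: dvN. Qed.
Lemma dvW j k x : (j <= k)%N -> dv k x -> dv j x.
Proof.
move=> le h; rewrite /dv (_ : x / pi ^+ j = (x / pi ^+ k) * pi ^+ (k - j)).
  by apply: vintM => //; apply: vintX; right; rewrite Hpi.2.
have e : pi ^+ k = pi ^+ (k - j) * pi ^+ j by rewrite -exprD subnK.
have n1 := piX_neq0 (k - j); have n2 := piX_neq0 j.
by rewrite e; field; rewrite n1 n2.
Qed.
Lemma dvM j k x y : dv j x -> dv k y -> dv (j + k) (x * y).
Proof.
move=> h1 h2; rewrite /dv (_ : x * y / pi ^+ (j + k) = (x / pi ^+ j) * (y / pi ^+ k)).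
  exact: vintM.
by rewrite exprD invfM; ring.
Qed.
Lemma dv0x x : dv 0 x <-> vint v x.
Proof. by rewrite /dv expr0 invr1 mulr1. Qed.
Lemma dv1x x : dv 1 x <-> vmax v x.
Proof. by rewrite /dv expr1 vmaxE. Qed.
Lemma dv_intM k x y : vint v x -> dv k y -> dv k (x * y).
Proof. by move=> /dv0x h1 h2; have := dvM h1 h2; rewrite add0n. Qed.

Lemma dv_all_zero x : (forall k, dv k x) -> x = 0.
Proof.
move=> h; have [//|nx] := eqVneq x 0.
have := h `|v x|.+1%N; case/dv_val=> [->//|]; lia.
Qed.

Lemma hensel u : vmax v (u - 1) -> exists w, w ^+ 2 = u.
Proof.
move=> hu.
have h2 : (2%:R : F) != 0 by case: vunit2.
pose fix w k := if k is k'.+1 then (w k' + u / w k') / 2%:R else 1.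
have inv : forall k, [/\ vunit v (w k), vmax v (w k - 1) & dv k.+1 (w k ^+ 2 - u)].
  elim=> [|k [uk mk dk]] /=.
    split; [exact: vunit1| by rewrite subrr; left|].
    by rewrite dv1x expr1n -opprB; apply: vmaxN.
  have nwk : w k != 0 by case: uk.
  have ediff : (w k + u / w k) / 2%:R - w k = - (w k ^+ 2 - u) * ((2%:R)^-1 * (w k)^-1).
    by field; rewrite nwk h2.
  have mdiff : vmax v ((w k + u / w k) / 2%:R - w k).
    rewrite ediff mulrC; apply: vmaxM; first by apply: vintM; [exact: vint_half|exact: vunitV_int].
    by apply/dv1x; apply: (dvW (k := k.+1)) => //; apply: dvN.
  split.
  - have -> : (w k + u / w k) / 2%:R = w k + ((w k + u / w k) / 2%:R - w k) by ring.
    exact: unit_add_max.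
  - have -> : (w k + u / w k) / 2%:R - 1 = ((w k + u / w k) / 2%:R - w k) + (w k - 1) by ring.
    exact: vmaxD.
  - have -> : ((w k + u / w k) / 2%:R) ^+ 2 - u = (w k ^+ 2 - u) * (w k ^+ 2 - u) * ((2%:R)^-1 * (w k)^-1) ^+ 2.
      by field; rewrite nwk h2.
    apply: (dvW (k := k.+1 + k.+1 + 0)); first by lia.
    apply: dvM; first exact: dvM.
    by apply/dv0x; apply: vintX; apply: vintM; [exact: vint_half|exact: vunitV_int].
have step : forall k, dv k.+1 (w k.+1 - w k).
  move=> k; have [uk _ dk] := inv k; have nwk : w k != 0 by case: uk.
  have -> : w k.+1 - w k = ((2%:R)^-1 * (w k)^-1) * - (w k ^+ 2 - u) by rewrite /=; field; rewrite nwk h2.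
  apply: dv_intM; last exact: dvN.
  by apply: vintM; [exact: vint_half|exact: vunitV_int].
have cau : forall K m, (K <= m)%N -> dv K.+1 (w m - w K).
  move=> K m le; elim: m le => [|m IH] le.
    by move: le; rewrite leqn0 => /eqP ->; rewrite subrr /dv mul0r; left.
  move: le; rewrite leq_eqVlt => /orP[/eqP <-|lt]; first by rewrite subrr /dv mul0r; left.
  rewrite -(subrK (w m) (w m.+1)) -addrA; apply: dvD; last exact: IH.
  by apply: (dvW (k := m.+1)) => //; exact: step.
have [l hl] : exists l, vconverges v w l.
  apply: (v_complete HF) => N; exists `|N|%N => m k hm hk.
  have : dv `|N|%N.+1 (w m - w k).
    rewrite -(subrKA (w `|N|%N)); apply: dvD; first exact: cau.
    by rewrite -opprB; apply: dvN; apply: cau.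
  have hN : N <= (`|N|%N)%:Z by rewrite abszE ler_norm.
  case/dv_val => [->|h]; [by left| right].
  by apply: le_trans hN _; apply: le_trans _ h; rewrite lez_nat.
exists l; apply/eqP; rewrite -subr_eq0; apply/eqP; apply: dv_all_zero => j.
have [K hK] := hl j%:Z.
pose m := maxn K j.
have hm : dv j (w m - l) by apply/dv_val; apply: hK; rewrite leq_maxl.
have [_ _ dm] := inv m.
have -> : l ^+ 2 - u = (w m ^+ 2 - u) - (w m - l) * (w m + l) by ring.
apply: dvB; first by apply: (dvW (k := m.+1)) => //; rewrite /m; lia.
rewrite mulrC; apply: dv_intM => //.
have [um _ _] := inv m.
rewrite (_ : w m + l = w m + w m - (w m - l)); last by ring.
apply: vintB; first by apply: vintD; exact: vunit_int.
by apply/dv0x; apply: (dvW (k := j)).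
Qed.


Definition sqmod (c : F) := exists z, vint v z /\ vmax v (c - z ^+ 2).

Notation cong x y := (vmax v (x - y)).
Lemma cong_sym x y : cong x y -> cong y x.
Proof. by move/vmaxN; rewrite opprB. Qed.
Lemma cong_trans x y z : cong x y -> cong y z -> cong x z.
Proof. by move=> h1 h2; have := vmaxD h1 h2; rewrite addrA subrK. Qed.
Lemma cong_mul z x y : vint v z -> cong x y -> cong (z * x) (z * y).
Proof. by move=> hz h; rewrite -mulrBr; apply: vmaxM. Qed.

Lemma sqmod_unit c : vunit v c -> sqmod c -> exists w, vunit v w /\ w ^+ 2 = c.
Proof.
move=> uc [z [iz mz]].
have uz : vunit v z.
  apply: unit_of_int => // mz'; apply: (not_max_unit uc).
  have -> : c = (c - z ^+ 2) + z * z by rewrite expr2; ring.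
  by apply: vmaxD => //; apply: vmaxM.
have nz : z != 0 by case: uz.
have [w0 hw0] : exists w, w ^+ 2 = c / z ^+ 2.
  apply: hensel.
  have -> : c / z ^+ 2 - 1 = (c - z ^+ 2) * (z ^+ 2)^-1 by field.
  rewrite mulrC; apply: vmaxM => //; apply: vunitV_int; rewrite expr2; exact: vunitM.
have e : z ^+ 2 * (c / z ^+ 2) = c by field.
exists (z * w0); split; last by rewrite exprMn hw0 e.
by apply: vunit_sq; rewrite exprMn hw0 e.
Qed.

Lemma unit_cong x y : vunit v x -> vint v y -> cong y x -> vunit v y.
Proof. by move=> ux iy h; rewrite -(subrK x y) addrC; apply: unit_add_max. Qed.

Lemma ff_sq a b : vunit v a -> vunit v b -> ~ sqmod a -> ~ sqmod b -> sqmod (a * b).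
Proof.
move=> ua ub na nb.
have ia := vunit_int ua; have ib := vunit_int ub.
have [s [sint scov]] := v_residue_finite HF.
pose m := size s.
pose cls (x : F) : {set 'I_m} := [set i : 'I_m | pb (cong x (nth 0 s i))].
have nth_int : forall i : 'I_m, vint v (nth 0 s i) by move=> i; apply: sint; apply: mem_nth.
have cov : forall x, vint v x -> exists i : 'I_m, cong x (nth 0 s i).
  move=> x /scov[y ys hy].
  have hi : (index y s < m)%N by rewrite index_mem.
  by exists (Ordinal hi) => /=; rewrite nth_index.
have clsE : forall x y, vint v x -> cls x = cls y -> cong x y.
  move=> x y ix e; have [i hi] := cov x ix.
  have : i \in cls y by rewrite -e inE; apply/pbP.
  rewrite inE => /pbP h; apply: cong_trans hi (cong_sym h).
have clsI : forall x y, cong x y -> cls x = cls y.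
  move=> x y h; apply/setP => i; rewrite !inE; apply/pbP/pbP => h'.
    exact: cong_trans (cong_sym h) h'.
  exact: cong_trans h h'.
pose elt (c : {set 'I_m}) := if [pick i in c] is Some i then nth 0 s i else 0.
have elt_cls : forall x, vint v x -> cong (elt (cls x)) x /\ vint v (elt (cls x)).
  move=> x ix; rewrite /elt; case: pickP => [i|h].
    by rewrite inE => /pbP hi; split; [exact: cong_sym|].
  by exfalso; have [i hi] := cov x ix; move: (h i); rewrite inE; move/pbP.
have cls_elt : forall x, vint v x -> cls (elt (cls x)) = cls x.
  by move=> x ix; apply: clsI; case: (elt_cls x ix).
pose U := [set c | pb (exists x, vunit v x /\ c = cls x)].
pose Q := [set c | pb (exists x, vunit v x /\ c = cls (x ^+ 2))].
have sqU : forall x, vunit v x -> vunit v (x ^+ 2) by move=> x ux; rewrite expr2; exact: vunitM.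
have QU : Q \subset U.
  apply/subsetP => c; rewrite !inE => /pbP[x [ux ->]]; apply/pbP.
  by exists (x ^+ 2); split => //; apply: sqU.
have eltU : forall c, c \in U -> [/\ vunit v (elt c), c = cls (elt c) & vint v (elt c)].
  move=> c; rewrite inE => /pbP[x [ux ->]].
  have [h1 h2] := elt_cls x (vunit_int ux).
  by split => //; [apply: unit_cong ux h2 h1 | rewrite cls_elt //; apply: vunit_int].
pose psi c := cls (a * elt c).
have psiQ : forall c, c \in Q -> psi c \in U :\: Q.
  move=> c cQ; have cU : c \in U by apply: (subsetP QU).
  have [ue ce ie] := eltU c cU.
  rewrite !inE; apply/andP; split.
    apply/negP => /pbP[y [uy ey]].
    move: cQ; rewrite inE => /pbP[x [ux ex]].
    have h1 : cong (a * elt c) (y ^+ 2) by apply: clsE; [apply: vintM|].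
    have h2 : cong (elt c) (x ^+ 2) by rewrite ex; case: (elt_cls (x ^+ 2) (vunit_int (sqU x ux))).
    have nx : x != 0 by case: ux.
    apply: na; exists (y / x); split; first by apply: vintM; [apply: vunit_int|apply: vunitV_int].
    have -> : a - (y / x) ^+ 2 = (x ^- 2) * ((a * elt c - y ^+ 2) - a * (elt c - x ^+ 2)) by field.
    apply: vmaxM; first by apply: vunitV_int; apply: sqU.
    by apply: vmaxD => //; apply: vmaxN; apply: vmaxM.
  apply/pbP; exists (a * elt c); split => //; exact: vunitM.
have psi_inj : {in Q &, injective psi}.
  move=> c1 c2 /(subsetP QU) c1U /(subsetP QU) c2U e.
  have [u1 ce1 i1] := eltU c1 c1U; have [u2 ce2 i2] := eltU c2 c2U.
  have h := clsE _ _ (vintM ia i1) e.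
  rewrite ce1 ce2; apply: clsI.
  have na0 : a != 0 by case: ua.
  have -> : elt c1 - elt c2 = a^-1 * (a * elt c1 - a * elt c2) by field.
  by apply: vmaxM => //; apply: vunitV_int.
have card1 : (#|Q| <= #|U :\: Q|)%N.
  rewrite -(card_in_imset psi_inj); apply: subset_leq_card; apply/subsetP => y /imsetP[c cQ ->].
  exact: psiQ.
pose phi c := cls (elt c ^+ 2).
pose neg c := cls (- elt c).
pose sig j := if [pick c in U | phi c == j] is Some c then c else j.
have sigP : forall c, c \in U -> sig (phi c) \in U /\ phi (sig (phi c)) = phi c.
  move=> c cU; rewrite /sig; case: pickP => [c' /andP[c'U /eqP e]|h]; first by [].
  by move: (h c); rewrite cU eqxx.
have cover : U \subset (sig @: Q) :|: ((fun j => neg (sig j)) @: Q).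
  apply/subsetP => c cU; have [ue ce ie] := eltU c cU.
  have jQ : phi c \in Q by rewrite inE; apply/pbP; exists (elt c).
  have [c'U e] := sigP c cU.
  have [ue' ce' ie'] := eltU _ c'U.
  have h1 : cong (elt (sig (phi c)) ^+ 2) (elt c ^+ 2) by apply: clsE; [apply: vintX|].
  have : vmax v ((elt (sig (phi c)) - elt c) * (elt (sig (phi c)) + elt c)).
    by move: h1; rewrite (_ : elt (sig (phi c)) ^+ 2 - elt c ^+ 2 = (elt (sig (phi c)) - elt c) * (elt (sig (phi c)) + elt c)) //; ring.
  rewrite in_setU; case/max_prime; [exact: vintB| exact: vintD| move=> h2|move=> h2].
    apply/orP; left; apply/imsetP; exists (phi c) => //.
    by rewrite ce' {1}ce; apply: clsI; apply: cong_sym.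
  apply/orP; right; apply/imsetP; exists (phi c) => //.
  rewrite {1}ce /neg; apply: clsI.
  by rewrite (_ : elt c - - elt (sig (phi c)) = elt (sig (phi c)) + elt c); [|ring].
have card2 : (#|U| <= #|Q| + #|Q|)%N.
  apply: leq_trans (subset_leq_card cover) _; apply: leq_trans (leq_card_setU _ _) _.
  by apply: leq_add; apply: leq_imset_card.
have cardU : #|U| = (#|Q| + #|U :\: Q|)%N.
  by rewrite -(cardsID Q U) (setIidPr QU).
have eqD : psi @: Q = U :\: Q.
  apply/eqP; rewrite eqEcard; apply/andP; split.
    by apply/subsetP => y /imsetP[c cQ ->]; exact: psiQ.
  rewrite (card_in_imset psi_inj); lia.
have bD : cls b \in U :\: Q.
  rewrite !inE; apply/andP; split; last by apply/pbP; exists b.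
  apply/negP => /pbP[y [uy ey]]; apply: nb; exists y; split; first exact: vunit_int.
  exact: clsE.
move: bD; rewrite -eqD => /imsetP[c cQ ebc].
move: cQ; rewrite inE => /pbP[x [ux ex]].
have h1 : cong b (a * elt c) by apply: clsE.
have h2 : cong (elt c) (x ^+ 2) by rewrite ex; case: (elt_cls (x ^+ 2) (vunit_int (sqU x ux))).
exists (a * x); split; first by apply: vintM => //; apply: vunit_int.
have -> : a * b - (a * x) ^+ 2 = a * (b - a * elt c) + a * a * (elt c - x ^+ 2) by ring.
by apply: vmaxD; apply: vmaxM => //; apply: vintM.
Qed.


Lemma Nw_unit_ram e b : vint v b -> vint v e -> vunit v (1 - 4%:R * e) ->
  ~ (exists w, vunit v w /\ w ^+ 2 = 1 - 4%:R * e) -> vunit v (1 + b + b ^+ 2 * e).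
Proof.
move=> ib ie ud nsq.
have iN : vint v (1 + b + b ^+ 2 * e) by apply: vintD; [apply: vintD => //; exact: vint1|apply: vintM => //; exact: vintX].
apply: (unit_of_int iN) => mN.
case: (vint_cases ib) => [mb|ub].
  apply: not_max1; rewrite (_ : 1 = (1 + b + b ^+ 2 * e) - b * (1 + b * e)); last by ring.
  apply: vmaxD => //; apply: vmaxN; rewrite mulrC; apply: vmaxM => //.
  by apply: vintD; [exact: vint1|exact: vintM].
apply: nsq; apply: sqmod_unit => //.
have nb : b != 0 by case: ub.
exists ((2%:R + b) / b); split.
  by apply: vintM; [apply: vintD => //; exact: vintn|exact: vunitV_int].
rewrite (_ : 1 - 4%:R * e - ((2%:R + b) / b) ^+ 2 = - (4%:R * (b ^+ 2)^-1 * (1 + b + b ^+ 2 * e))); last by field.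
apply: vmaxN; apply: vmaxM => //; apply: vintM; first exact: vintn.
by apply: vunitV_int; rewrite expr2; exact: vunitM.
Qed.

Variables (e a b K L P1 : F).
Hypothesis HKL : pi = K * L.
Hypotheses (iK : vint v K) (iL : vint v L) (iP1 : vint v P1) (ia : vint v a) (ib : vint v b) (ie : vint v e).
Hypotheses (nK : K != 0) (nL : L != 0) (nP1 : P1 != 0).
Hypotheses (ud : vunit v (1 - 4%:R * e)) (uNw : vunit v (1 + b + b ^+ 2 * e)).

Local Notation dd := ((2%:R)^-1 ^+ 2 - e).
Local Notation Nw := (1 + b + b ^+ 2 * e).
Local Notation UU := (- Nw - pi * a ^+ 2 * dd).
Local Notation al := (pi * a).
Local Notation mul := (qmul e pi).
Local Notation nr := (Nr e pi).

Definition inOc (y : quat F) := [/\ vint v (q0 y), vint v (q2 y),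
  vint v ((q1 y - pi * a * q2 y) / (K * K * L * P1)) & vint v ((q3 y - b * q2 y) / (K * L * P1))].
Definition cj (m y : quat F) := qscale (nr m)^-1 (mul (mul m y) (qconj m)).
Definition de := Quat (- (pi * a) * (2%:R)^-1) (pi * a) 1 b.
Definition e2 := Quat 0 (K * K * L * P1) 0 0.
Definition e3 := Quat 0 0 0 (K * L * P1).
Definition ff := Quat (- (pi * UU) * (2%:R)^-1 - dd * al * al * (2%:R)^-1) (pi * UU + dd * al * al) (dd * al) (dd * al * b).
Definition oo t := Quat (1 - t * al * (2%:R)^-1) (t * al) t (t * b).

Lemma two_neq0 : (2%:R : F) != 0. Proof. by case: vunit2. Qed.
Lemma four_neq0 : (4%:R : F) != 0.
Proof. by rewrite (_ : 4%:R = 2%:R * 2%:R :> F) ?mulf_neq0 ?two_neq0 // -natrM. Qed.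
Ltac nz := do ?[apply/andP; split]; try by [done | exact: two_neq0 | exact: four_neq0 | assumption | exact: (proj1 Hpi)].

Lemma udd : vunit v dd.
Proof.
rewrite (_ : dd = (1 - 4%:R * e) * ((2%:R)^-1 ^+ 2)); last by field; exact: two_neq0.
apply: vunitM => //; rewrite expr2; apply: vunitM; exact: vunitV vunit2.
Qed.
Lemma uUU : vunit v UU.
Proof.
apply: unit_add_max; first exact: vunitN.
apply: vmaxN; rewrite -mulrA; apply: vmax_pi; apply: vintM; first exact: vintX.
exact: vunit_int udd.
Qed.
Lemma iUUV : vint v UU^-1. Proof. exact: vunitV_int uUU. Qed.
Lemma iffV : vint v (dd * UU * Nw)^-1.
Proof. apply: vunitV_int; apply: vunitM => //; apply: vunitM; [exact: udd|exact: uUU]. Qed.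
Lemma uoo t : vint v t -> vunit v (1 + t ^+ 2 * pi * UU).
Proof.
move=> it; apply: unit_add_max; first exact: vunit1.
have -> : t ^+ 2 * pi * UU = pi * (t ^+ 2 * UU) by ring.
apply: vmax_pi; apply: vintM; first exact: vintX.
apply: vunit_int; exact: uUU.
Qed.

Ltac vint_tac := repeat first [ assumption | apply: vintD | apply: vintM | apply: vintN
  | apply: vintX | apply: vintn | apply: vint_half | apply: vint1 | apply: vint0 | exact: iUUV | exact: iffV | (apply: vunitV_int; exact: uoo) ].

Lemma qmulE (x y : quat F) : qmul e pi x y = Quat
  (q0 x * q0 y - e * (q1 x * q1 y) + pi * (q2 x * (q2 y + q3 y) - e * (q3 x * - q3 y)))
  (q0 x * q1 y + q1 x * q0 y + q1 x * q1 y + pi * (q2 x * - q3 y + q3 x * (q2 y + q3 y) + q3 x * - q3 y))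
  (q2 x * (q0 y + q1 y) - e * (q3 x * - q1 y) + (q0 x * q2 y - e * (q1 x * q3 y)))
  (q2 x * - q1 y + q3 x * (q0 y + q1 y) + q3 x * - q1 y + (q0 x * q3 y + q1 x * q2 y + q1 x * q3 y)).
Proof. by case: x; case: y. Qed.

Lemma nUU : UU != 0. Proof. by case: uUU. Qed.
Lemma nffD : dd * UU * Nw != 0.
Proof. by rewrite !mulf_neq0 //; [case: udd|exact: nUU|case: uNw]. Qed.
Lemma nooD t : vint v t -> 1 + t ^+ 2 * pi * UU != 0. Proof. by move=> it; case: (uoo it). Qed.
Lemma nr_de : nr de = pi * UU.
Proof. rewrite /Nr /qmul /qconj /Kmul /Kadd /Kconj /Kscale /de /=. field. exact: two_neq0. Qed.
Lemma nr_ff : nr ff = pi ^+ 2 * (dd * UU * Nw).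
Proof. rewrite /Nr /qmul /qconj /Kmul /Kadd /Kconj /Kscale /ff /=. field. exact: two_neq0. Qed.
Lemma nr_oo t : nr (oo t) = 1 + t ^+ 2 * pi * UU.
Proof. rewrite /Nr /qmul /qconj /Kmul /Kadd /Kconj /Kscale /oo /=. field. exact: two_neq0. Qed.

Tactic Notation "cj_field" constr(nrlem) constr(D) constr(nD) :=
  rewrite /cj nrlem; move: (D) (nD) => u nu;
  rewrite !qmulE; try unfold de; try unfold e2; try unfold e3; try unfold ff; try unfold oo;
  unfold qconj, qscale; cbn [q0 q1 q2 q3]; rewrite HKL; field;
  do ?[apply/andP; split]; by [exact: two_neq0 | assumption].

Lemma cj_de_de : inOc (cj de de).
Proof.
split.
- rewrite (_ : q0 (cj de de) = ((1 * (2%:R)^-1 ^+ 1 * a * K * L) + (1 * (2%:R)^-1 ^+ 1 * a * b * K * L) + (1 * (2%:R)^-1 ^+ 1 * a * b ^+ 2 * e * K * L) + (1 * (2%:R)^-1 ^+ 3 * a ^+ 3 * K ^+ 2 * L ^+ 2) - (1 * (2%:R)^-1 ^+ 1 * a ^+ 3 * e * K ^+ 2 * L ^+ 2)) * UU^-1); first by vint_tac.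
  cj_field nr_de (UU) nUU.
- rewrite (_ : q2 (cj de de) = (- (1) - (1 * b) - (1 * b ^+ 2 * e) - (1 * (2%:R)^-1 ^+ 2 * a ^+ 2 * K * L) + (1 * a ^+ 2 * e * K * L)) * UU^-1); first by vint_tac.
  cj_field nr_de (UU) nUU.
- rewrite (_ : (q1 (cj de de) - pi * a * q2 (cj de de)) / (K * K * L * P1) = (0) * UU^-1); first by vint_tac.
  cj_field nr_de (UU) nUU.
- rewrite (_ : (q3 (cj de de) - b * q2 (cj de de)) / (K * L * P1) = (0) * UU^-1); first by vint_tac.
  cj_field nr_de (UU) nUU.
Qed.
Lemma cj_ff_de : inOc (cj ff de).
Proof.
split.
- rewrite (_ : q0 (cj ff de) = (- (1 * (2%:R)^-1 ^+ 3 * a * K * L) + (1 * (2%:R)^-1 ^+ 1 * a * e * K * L) - (1 * (2%:R)^-1 ^+ 2 * a * b * K * L) + (1 * a * b * e * K * L) - (1 * (2%:R)^-1 ^+ 3 * a * b ^+ 2 * K * L) + (1 * (2%:R)^-1 ^+ 2 * a * b ^+ 2 * e * K * L) + (1 * a * b ^+ 2 * e ^+ 2 * K * L) - (1 * (2%:R)^-1 ^+ 2 * a * b ^+ 3 * e * K * L) + (1 * a * b ^+ 3 * e ^+ 2 * K * L) - (1 * (2%:R)^-1 ^+ 3 * a * b ^+ 4 * e ^+ 2 * K * L) + (1 * (2%:R)^-1 ^+ 1 * a * b ^+ 4 * e ^+ 3 * K * L) - (1 * (2%:R)^-1 ^+ 5 * a ^+ 3 * K ^+ 2 * L ^+ 2)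 + (1 * (2%:R)^-1 ^+ 2 * a ^+ 3 * e * K ^+ 2 * L ^+ 2) - (1 * (2%:R)^-1 ^+ 1 * a ^+ 3 * e ^+ 2 * K ^+ 2 * L ^+ 2) - (1 * (2%:R)^-1 ^+ 5 * a ^+ 3 * b * K ^+ 2 * L ^+ 2) + (1 * (2%:R)^-1 ^+ 2 * a ^+ 3 * b * e * K ^+ 2 * L ^+ 2) - (1 * (2%:R)^-1 ^+ 1 * a ^+ 3 * b * e ^+ 2 * K ^+ 2 * L ^+ 2) - (1 * (2%:R)^-1 ^+ 5 * a ^+ 3 * b ^+ 2 * e * K ^+ 2 * L ^+ 2) + (1 * (2%:R)^-1 ^+ 2 * a ^+ 3 * b ^+ 2 * e ^+ 2 * K ^+ 2 * L ^+ 2) - (1 * (2%:R)^-1 ^+ 1 * a ^+ 3 * b ^+ 2 * e ^+ 3 * K ^+ 2 * L ^+ 2)) * (dd * UU * Nw)^-1); first by vint_tac.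
  cj_field nr_ff (dd * UU * Nw) nffD.
- rewrite (_ : q2 (cj ff de) = ((1 * (2%:R)^-1 ^+ 2) - (1 * e) + (1 * (2%:R)^-1 ^+ 1 * b) - (2%:R * b * e) + (1 * (2%:R)^-1 ^+ 2 * b ^+ 2) - (1 * (2%:R)^-1 ^+ 1 * b ^+ 2 * e) - (2%:R * b ^+ 2 * e ^+ 2) + (1 * (2%:R)^-1 ^+ 1 * b ^+ 3 * e) - (2%:R * b ^+ 3 * e ^+ 2) + (1 * (2%:R)^-1 ^+ 2 * b ^+ 4 * e ^+ 2) - (1 * b ^+ 4 * e ^+ 3) + (1 * (2%:R)^-1 ^+ 4 * a ^+ 2 * K * L) - (1 * (2%:R)^-1 ^+ 1 * a ^+ 2 * e * K * L) + (1 * a ^+ 2 * e ^+ 2 * K * L) + (1 * (2%:R)^-1 ^+ 4 * a ^+ 2 * b * K * L) - (1 * (2%:R)^-1 ^+ 1 * a ^+ 2 * b * e * K * L) + (1 * a ^+ 2 * b * e ^+ 2 * K * L) + (1 * (2%:R)^-1 ^+ 4 * a ^+ 2 * b ^+ 2 * e * K * L) - (1 * (2%:R)^-1 ^+ 1 * a ^+ 2 * b ^+ 2 * e ^+ 2 * K * L) + (1 * a ^+ 2 * b ^+ 2 * e ^+ 3 * K * L)) * (dd * UU * Nw)^-1); first by vint_tac.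
  cj_field nr_ff (dd * UU * Nw) nffD.
- rewrite (_ : (q1 (cj ff de) - pi * a * q2 (cj ff de)) / (K * K * L * P1) = (0) * (dd * UU * Nw)^-1); first by vint_tac.
  cj_field nr_ff (dd * UU * Nw) nffD.
- rewrite (_ : (q3 (cj ff de) - b * q2 (cj ff de)) / (K * L * P1) = (0) * (dd * UU * Nw)^-1); first by vint_tac.
  cj_field nr_ff (dd * UU * Nw) nffD.
Qed.
Lemma cj_oo_de t (it : vint v t): inOc (cj (oo t) de).
Proof.
split.
- rewrite (_ : q0 (cj (oo t) de) = (- (1 * (2%:R)^-1 ^+ 1 * a * K * L) + (1 * (2%:R)^-1 ^+ 1 * a * t ^+ 2 * K ^+ 2 * L ^+ 2) + (1 * (2%:R)^-1 ^+ 1 * a * b * t ^+ 2 * K ^+ 2 * L ^+ 2) + (1 * (2%:R)^-1 ^+ 1 * a * b ^+ 2 * e * t ^+ 2 * K ^+ 2 * L ^+ 2) + (1 * (2%:R)^-1 ^+ 3 * a ^+ 3 * t ^+ 2 * K ^+ 3 * L ^+ 3) - (1 * (2%:R)^-1 ^+ 1 * a ^+ 3 * e * t ^+ 2 * K ^+ 3 * L ^+ 3)) * (1 + t ^+ 2 * pi * UU)^-1); first by vint_tac.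
  cj_field (nr_oo t) (1 + t ^+ 2 * pi * UU) (nooD it).
- rewrite (_ : q2 (cj (oo t) de) = ((1) - (1 * t ^+ 2 * K * L) - (1 * b * t ^+ 2 * K * L) - (1 * b ^+ 2 * e * t ^+ 2 * K * L) - (1 * (2%:R)^-1 ^+ 2 * a ^+ 2 * t ^+ 2 * K ^+ 2 * L ^+ 2) + (1 * a ^+ 2 * e * t ^+ 2 * K ^+ 2 * L ^+ 2)) * (1 + t ^+ 2 * pi * UU)^-1); first by vint_tac.
  cj_field (nr_oo t) (1 + t ^+ 2 * pi * UU) (nooD it).
- rewrite (_ : (q1 (cj (oo t) de) - pi * a * q2 (cj (oo t) de)) / (K * K * L * P1) = (0) * (1 + t ^+ 2 * pi * UU)^-1); first by vint_tac.
  cj_field (nr_oo t) (1 + t ^+ 2 * pi * UU) (nooD it).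
- rewrite (_ : (q3 (cj (oo t) de) - b * q2 (cj (oo t) de)) / (K * L * P1) = (0) * (1 + t ^+ 2 * pi * UU)^-1); first by vint_tac.
  cj_field (nr_oo t) (1 + t ^+ 2 * pi * UU) (nooD it).
Qed.
Lemma cj_de_e2 : inOc (cj de e2).
Proof.
split.
- rewrite (_ : q0 (cj de e2) = (- (1 * P1 * K ^+ 2 * L) - (1 * b * P1 * K ^+ 2 * L) - (1 * b ^+ 2 * e * P1 * K ^+ 2 * L)) * UU^-1); first by vint_tac.
  cj_field nr_de (UU) nUU.
- rewrite (_ : q2 (cj de e2) = (- (1 * (2%:R)^-1 ^+ 1 * a * P1 * K ^+ 2 * L) + (2%:R * a * e * P1 * K ^+ 2 * L)) * UU^-1); first by vint_tac.
  cj_field nr_de (UU) nUU.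
- rewrite (_ : (q1 (cj de e2) - pi * a * q2 (cj de e2)) / (K * K * L * P1) = ((1) + (1 * b) + (1 * b ^+ 2 * e) + (1 * (2%:R)^-1 ^+ 2 * a ^+ 2 * K * L) - (1 * a ^+ 2 * e * K * L)) * UU^-1); first by vint_tac.
  cj_field nr_de (UU) nUU.
- rewrite (_ : (q3 (cj de e2) - b * q2 (cj de e2)) / (K * L * P1) = (0) * UU^-1); first by vint_tac.
  cj_field nr_de (UU) nUU.
Qed.
Lemma cj_ff_e2 : inOc (cj ff e2).
Proof.
split.
- rewrite (_ : q0 (cj ff e2) = (- (1 * (2%:R)^-1 ^+ 4 * a ^+ 2 * P1 * K ^+ 3 * L ^+ 2) + (1 * (2%:R)^-1 ^+ 1 * a ^+ 2 * e * P1 * K ^+ 3 * L ^+ 2) - (1 * a ^+ 2 * e ^+ 2 * P1 * K ^+ 3 * L ^+ 2) - (1 * (2%:R)^-1 ^+ 4 * a ^+ 2 * b * P1 * K ^+ 3 * L ^+ 2) + (1 * (2%:R)^-1 ^+ 1 * a ^+ 2 * b * e * P1 * K ^+ 3 * L ^+ 2) - (1 * a ^+ 2 * b * e ^+ 2 * P1 * K ^+ 3 * L ^+ 2) - (1 * (2%:R)^-1 ^+ 4 * a ^+ 2 * b ^+ 2 * e * P1 * K ^+ 3 * L ^+ 2) + (1 * (2%:R)^-1 ^+ 1 * a ^+ 2 * b ^+ 2 * e ^+ 2 * P1 * K ^+ 3 * L ^+ 2) - (1 * a ^+ 2 * b ^+ 2 * e ^+ 3 * P1 * K ^+ 3 *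 L ^+ 2)) * (dd * UU * Nw)^-1); first by vint_tac.
  cj_field nr_ff (dd * UU * Nw) nffD.
- rewrite (_ : q2 (cj ff e2) = ((1 * (2%:R)^-1 ^+ 3 * a * P1 * K ^+ 2 * L) - (1 * a * e * P1 * K ^+ 2 * L) + (2%:R * a * e ^+ 2 * P1 * K ^+ 2 * L) + (1 * (2%:R)^-1 ^+ 3 * a * b * P1 * K ^+ 2 * L) - (1 * a * b * e * P1 * K ^+ 2 * L) + (2%:R * a * b * e ^+ 2 * P1 * K ^+ 2 * L) + (1 * (2%:R)^-1 ^+ 3 * a * b ^+ 2 * e * P1 * K ^+ 2 * L) - (1 * a * b ^+ 2 * e ^+ 2 * P1 * K ^+ 2 * L) + (2%:R * a * b ^+ 2 * e ^+ 3 * P1 * K ^+ 2 * L)) * (dd * UU * Nw)^-1); first by vint_tac.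
  cj_field nr_ff (dd * UU * Nw) nffD.
- rewrite (_ : (q1 (cj ff e2) - pi * a * q2 (cj ff e2)) / (K * K * L * P1) = (- (1 * (2%:R)^-1 ^+ 2) + (1 * e) - (1 * (2%:R)^-1 ^+ 1 * b) + (2%:R * b * e) - (1 * (2%:R)^-1 ^+ 2 * b ^+ 2) + (1 * (2%:R)^-1 ^+ 1 * b ^+ 2 * e) + (2%:R * b ^+ 2 * e ^+ 2) - (1 * (2%:R)^-1 ^+ 1 * b ^+ 3 * e) + (2%:R * b ^+ 3 * e ^+ 2) - (1 * (2%:R)^-1 ^+ 2 * b ^+ 4 * e ^+ 2) + (1 * b ^+ 4 * e ^+ 3) - (1 * (2%:R)^-1 ^+ 4 * a ^+ 2 * K * L) + (1 * (2%:R)^-1 ^+ 1 * a ^+ 2 * e * K * L) - (1 * a ^+ 2 * e ^+ 2 * K * L) - (1 * (2%:R)^-1 ^+ 4 * a ^+ 2 * b * K * L) + (1 * (2%:R)^-1 ^+ 1 * a ^+ 2 * b * e * K * L) - (1 * a ^+ 2 * b * e ^+ 2 * K * L) - (1 * (2%:R)^-1 ^+ 4 * a ^+ 2 * b ^+ 2 * e * K * L) + (1 * (2%:R)^-1 ^+ 1 * a ^+ 2 * b ^+ 2 * e ^+ 2 * K * L) - (1 * a ^+ 2 * b ^+ 2 * e ^+ 3 * K * L)) * (dd * UU * Nw)^-1); first by vint_tac.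
  cj_field nr_ff (dd * UU * Nw) nffD.
- rewrite (_ : (q3 (cj ff e2) - b * q2 (cj ff e2)) / (K * L * P1) = (0) * (dd * UU * Nw)^-1); first by vint_tac.
  cj_field nr_ff (dd * UU * Nw) nffD.
Qed.
Lemma cj_oo_e2 t (it : vint v t): inOc (cj (oo t) e2).
Proof.
split.
- rewrite (_ : q0 (cj (oo t) e2) = (- (1 * P1 * t ^+ 2 * K ^+ 3 * L ^+ 2) - (1 * b * P1 * t ^+ 2 * K ^+ 3 * L ^+ 2) - (1 * b ^+ 2 * e * P1 * t ^+ 2 * K ^+ 3 * L ^+ 2)) * (1 + t ^+ 2 * pi * UU)^-1); first by vint_tac.
  cj_field (nr_oo t) (1 + t ^+ 2 * pi * UU) (nooD it).
- rewrite (_ : q2 (cj (oo t) e2) = ((1 * P1 * t * K ^+ 2 * L) + (2%:R * b * e * P1 * t * K ^+ 2 * L) - (1 * (2%:R)^-1 ^+ 1 * a * P1 * t ^+ 2 * K ^+ 3 * L ^+ 2) + (2%:R * a * e * P1 * t ^+ 2 * K ^+ 3 * L ^+ 2)) * (1 + t ^+ 2 * pi * UU)^-1); first by vint_tac.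
  cj_field (nr_oo t) (1 + t ^+ 2 * pi * UU) (nooD it).
- rewrite (_ : (q1 (cj (oo t) e2) - pi * a * q2 (cj (oo t) e2)) / (K * K * L * P1) = ((1) + (1 * t ^+ 2 * K * L) + (1 * b * t ^+ 2 * K * L) + (1 * b ^+ 2 * e * t ^+ 2 * K * L) - (1 * a * t * K * L) - (2%:R * a * b * e * t * K * L) + (1 * (2%:R)^-1 ^+ 2 * a ^+ 2 * t ^+ 2 * K ^+ 2 * L ^+ 2) - (1 * a ^+ 2 * e * t ^+ 2 * K ^+ 2 * L ^+ 2)) * (1 + t ^+ 2 * pi * UU)^-1); first by vint_tac.
  cj_field (nr_oo t) (1 + t ^+ 2 * pi * UU) (nooD it).
- rewrite (_ : (q3 (cj (oo t) e2) - b * q2 (cj (oo t) e2)) / (K * L * P1) = (- (2%:R * t * K) - (2%:R * b * t * K) - (2%:R * b ^+ 2 * e * t * K)) * (1 + t ^+ 2 * pi * UU)^-1); first by vint_tac.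
  cj_field (nr_oo t) (1 + t ^+ 2 * pi * UU) (nooD it).
Qed.
Lemma cj_de_e3 : inOc (cj de e3).
Proof.
split.
- rewrite (_ : q0 (cj de e3) = ((1 * (2%:R)^-1 ^+ 1 * a * P1 * K ^+ 2 * L ^+ 2) + (1 * a * b * e * P1 * K ^+ 2 * L ^+ 2)) * UU^-1); first by vint_tac.
  cj_field nr_de (UU) nUU.
- rewrite (_ : q2 (cj de e3) = (- (1 * P1 * K * L) - (2%:R * b * e * P1 * K * L)) * UU^-1); first by vint_tac.
  cj_field nr_de (UU) nUU.
- rewrite (_ : (q1 (cj de e3) - pi * a * q2 (cj de e3)) / (K * K * L * P1) = (0) * UU^-1); first by vint_tac.
  cj_field nr_de (UU) nUU.
- rewrite (_ : (q3 (cj de e3) - b * q2 (cj de e3)) / (K * L * P1) = ((1) + (1 * b) + (1 * b ^+ 2 * e) + (1 * (2%:R)^-1 ^+ 2 * a ^+ 2 * K * L) - (1 * a ^+ 2 * e * K * L)) * UU^-1); first by vint_tac.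
  cj_field nr_de (UU) nUU.
Qed.
Lemma cj_ff_e3 : inOc (cj ff e3).
Proof.
split.
- rewrite (_ : q0 (cj ff e3) = (- (1 * (2%:R)^-1 ^+ 3 * a * P1 * K ^+ 2 * L ^+ 2) + (1 * (2%:R)^-1 ^+ 1 * a * e * P1 * K ^+ 2 * L ^+ 2) - (1 * (2%:R)^-1 ^+ 3 * a * b * P1 * K ^+ 2 * L ^+ 2) + (1 * (2%:R)^-1 ^+ 2 * a * b * e * P1 * K ^+ 2 * L ^+ 2) + (1 * a * b * e ^+ 2 * P1 * K ^+ 2 * L ^+ 2) - (3%:R * (2%:R)^-1 ^+ 3 * a * b ^+ 2 * e * P1 * K ^+ 2 * L ^+ 2) + (3%:R * (2%:R)^-1 ^+ 1 * a * b ^+ 2 * e ^+ 2 * P1 * K ^+ 2 * L ^+ 2) - (1 * (2%:R)^-1 ^+ 2 * a * b ^+ 3 * e ^+ 2 * P1 * K ^+ 2 * L ^+ 2) + (1 * a * b ^+ 3 * e ^+ 3 * P1 * K ^+ 2 * L ^+ 2)) * (dd * UU * Nw)^-1); first by vint_tac.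
  cj_field nr_ff (dd * UU * Nw) nffD.
- rewrite (_ : q2 (cj ff e3) = (- (1 * (2%:R)^-1 ^+ 4 * a ^+ 2 * P1 * K ^+ 2 * L ^+ 2) + (1 * (2%:R)^-1 ^+ 1 * a ^+ 2 * e * P1 * K ^+ 2 * L ^+ 2) - (1 * a ^+ 2 * e ^+ 2 * P1 * K ^+ 2 * L ^+ 2) - (1 * (2%:R)^-1 ^+ 3 * a ^+ 2 * b * e * P1 * K ^+ 2 * L ^+ 2) + (1 * a ^+ 2 * b * e ^+ 2 * P1 * K ^+ 2 * L ^+ 2) - (2%:R * a ^+ 2 * b * e ^+ 3 * P1 * K ^+ 2 * L ^+ 2)) * (dd * UU * Nw)^-1); first by vint_tac.
  cj_field nr_ff (dd * UU * Nw) nffD.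
- rewrite (_ : (q1 (cj ff e3) - pi * a * q2 (cj ff e3)) / (K * K * L * P1) = ((1 * (2%:R)^-1 ^+ 2 * a * L) - (1 * a * e * L) + (1 * (2%:R)^-1 ^+ 2 * a * b * L) - (1 * (2%:R)^-1 ^+ 1 * a * b * e * L) - (2%:R * a * b * e ^+ 2 * L) + (3%:R * (2%:R)^-1 ^+ 2 * a * b ^+ 2 * e * L) - (3%:R * a * b ^+ 2 * e ^+ 2 * L) + (1 * (2%:R)^-1 ^+ 1 * a * b ^+ 3 * e ^+ 2 * L) - (2%:R * a * b ^+ 3 * e ^+ 3 * L) + (1 * (2%:R)^-1 ^+ 4 * a ^+ 3 * K * L ^+ 2) - (1 * (2%:R)^-1 ^+ 1 * a ^+ 3 * e * K * L ^+ 2) + (1 * a ^+ 3 * e ^+ 2 * K * L ^+ 2) + (1 * (2%:R)^-1 ^+ 3 * a ^+ 3 * b * e * K * L ^+ 2) - (1 * a ^+ 3 * b * e ^+ 2 * K * L ^+ 2) + (2%:R * a ^+ 3 * b * e ^+ 3 * K * L ^+ 2)) * (dd * UU * Nw)^-1); first by vint_tac.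
  cj_field nr_ff (dd * UU * Nw) nffD.
- rewrite (_ : (q3 (cj ff e3) - b * q2 (cj ff e3)) / (K * L * P1) = ((1 * (2%:R)^-1 ^+ 2) - (1 * e) + (1 * (2%:R)^-1 ^+ 1 * b) - (2%:R * b * e) + (1 * (2%:R)^-1 ^+ 2 * b ^+ 2) - (1 * (2%:R)^-1 ^+ 1 * b ^+ 2 * e) - (2%:R * b ^+ 2 * e ^+ 2) + (1 * (2%:R)^-1 ^+ 1 * b ^+ 3 * e) - (2%:R * b ^+ 3 * e ^+ 2) + (1 * (2%:R)^-1 ^+ 2 * b ^+ 4 * e ^+ 2) - (1 * b ^+ 4 * e ^+ 3) + (1 * (2%:R)^-1 ^+ 4 * a ^+ 2 * K * L) - (1 * (2%:R)^-1 ^+ 1 * a ^+ 2 * e * K * L) + (1 * a ^+ 2 * e ^+ 2 * K * L) + (1 * (2%:R)^-1 ^+ 4 * a ^+ 2 * b * K * L) - (1 * (2%:R)^-1 ^+ 1 * a ^+ 2 * b * e * K * L) + (1 * a ^+ 2 * b * e ^+ 2 * K * L) + (1 * (2%:R)^-1 ^+ 4 * a ^+ 2 * b ^+ 2 * e * K * L) - (1 * (2%:R)^-1 ^+ 1 * a ^+ 2 * b ^+ 2 * e ^+ 2 * K * L) + (1 * a ^+ 2 * b ^+ 2 * e ^+ 3 * K * L)) * (dd * UU * Nw)^-1); first by vint_tac.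
  cj_field nr_ff (dd * UU * Nw) nffD.
Qed.
Lemma cj_oo_e3 t (it : vint v t): inOc (cj (oo t) e3).
Proof.
split.
- rewrite (_ : q0 (cj (oo t) e3) = ((1 * P1 * t * K ^+ 2 * L ^+ 2) + (1 * (2%:R)^-1 ^+ 1 * a * P1 * t ^+ 2 * K ^+ 3 * L ^+ 3) + (1 * a * b * e * P1 * t ^+ 2 * K ^+ 3 * L ^+ 3)) * (1 + t ^+ 2 * pi * UU)^-1); first by vint_tac.
  cj_field (nr_oo t) (1 + t ^+ 2 * pi * UU) (nooD it).
- rewrite (_ : q2 (cj (oo t) e3) = (- (1 * P1 * t ^+ 2 * K ^+ 2 * L ^+ 2) - (2%:R * b * e * P1 * t ^+ 2 * K ^+ 2 * L ^+ 2) - (2%:R * a * e * P1 * t * K ^+ 2 * L ^+ 2)) * (1 + t ^+ 2 * pi * UU)^-1); first by vint_tac.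
  cj_field (nr_oo t) (1 + t ^+ 2 * pi * UU) (nooD it).
- rewrite (_ : (q1 (cj (oo t) e3) - pi * a * q2 (cj (oo t) e3)) / (K * K * L * P1) = (- (2%:R * t * L) + (2%:R * a ^+ 2 * e * t * K * L ^+ 2)) * (1 + t ^+ 2 * pi * UU)^-1); first by vint_tac.
  cj_field (nr_oo t) (1 + t ^+ 2 * pi * UU) (nooD it).
- rewrite (_ : (q3 (cj (oo t) e3) - b * q2 (cj (oo t) e3)) / (K * L * P1) = ((1) + (1 * t ^+ 2 * K * L) + (1 * b * t ^+ 2 * K * L) + (1 * b ^+ 2 * e * t ^+ 2 * K * L) + (1 * a * t * K * L) + (2%:R * a * b * e * t * K * L) + (1 * (2%:R)^-1 ^+ 2 * a ^+ 2 * t ^+ 2 * K ^+ 2 * L ^+ 2) - (1 * a ^+ 2 * e * t ^+ 2 * K ^+ 2 * L ^+ 2)) * (1 + t ^+ 2 * pi * UU)^-1); first by vint_tac.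
  cj_field (nr_oo t) (1 + t ^+ 2 * pi * UU) (nooD it).
Qed.

Definition trq (x : quat F) := 2%:R * q0 x + q1 x.
Definition mM (A B : F) := Quat (A - B * (pi * a) * (2%:R)^-1) (B * (pi * a)) B (B * b).

Lemma quat_eq (x y : quat F) : q0 x = q0 y -> q1 x = q1 y -> q2 x = q2 y -> q3 x = q3 y -> x = y.
Proof. by case: x => ????; case: y => ???? /= -> -> -> ->. Qed.

Ltac qring := apply: quat_eq; rewrite ?qmulE; cbn [q0 q1 q2 q3 qconj qscale qadd qs]; ring.

Lemma qassoc x y z : mul (mul x y) z = mul x (mul y z).
Proof. qring. Qed.
Lemma nrE x : nr x = q0 (mul x (qconj x)). Proof. by []. Qed.
Lemma nrM x y : nr (mul x y) = nr x * nr y.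
Proof. rewrite !nrE !qmulE; cbn [q0 q1 q2 q3 qconj]; ring. Qed.
Lemma conjM x y : qconj (mul x y) = mul (qconj y) (qconj x).
Proof. qring. Qed.
Lemma mulconj x : mul x (qconj x) = qs (nr x).
Proof. rewrite nrE; qring. Qed.
Lemma conjmul x : mul (qconj x) x = qs (nr x).
Proof. rewrite nrE; qring. Qed.
Lemma qsmul c y : mul (qs c) y = qscale c y. Proof. qring. Qed.
Lemma mulqs c y : mul y (qs c) = qscale c y. Proof. qring. Qed.
Lemma mulscale x c y : mul x (qscale c y) = qscale c (mul x y). Proof. qring. Qed.
Lemma scalemul x c y : mul (qscale c x) y = qscale c (mul x y). Proof. qring. Qed.
Lemma trC x y : trq (mul x y) = trq (mul y x).
Proof. rewrite /trq !qmulE; cbn [q0 q1 q2 q3]; ring. Qed.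
Lemma nr_scale c x : nr (qscale c x) = c ^+ 2 * nr x.
Proof. rewrite !nrE !qmulE; cbn [q0 q1 q2 q3 qconj qscale]; ring. Qed.
Lemma nr_conj x : nr (qconj x) = nr x.
Proof. rewrite !nrE !qmulE; cbn [q0 q1 q2 q3 qconj qscale]; ring. Qed.
Lemma sq0 z : trq z = 0 -> mul z z = qs (- nr z).
Proof.
rewrite /trq => h; have h1 : q1 z = - (2%:R * q0 z) by apply/eqP; rewrite -addr_eq0 addrC h.
rewrite nrE; apply: quat_eq; rewrite ?qmulE; cbn [q0 q1 q2 q3 qconj qs]; rewrite h1; ring.
Qed.
Lemma conj0 z : trq z = 0 -> qconj z = qscale (-1) z.
Proof.
rewrite /trq => h; have h1 : q1 z = - (2%:R * q0 z) by apply/eqP; rewrite -addr_eq0 addrC h.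
apply: quat_eq; cbn [q0 q1 q2 q3 qconj qscale]; rewrite ?h1; ring.
Qed.
Lemma qoneE : qone F = qs (1 : F). Proof. by []. Qed.
Lemma scale1q (x : quat F) : qscale 1 x = x. Proof. by apply: quat_eq; cbn; rewrite mul1r. Qed.

Lemma cj_add m y z : cj m (qadd y z) = qadd (cj m y) (cj m z).
Proof. rewrite /cj; qring. Qed.
Lemma cj_scale m c y : cj m (qscale c y) = qscale c (cj m y).
Proof. rewrite /cj; qring. Qed.
Lemma cj_qs m c : nr m != 0 -> cj m (qs c) = qs c.
Proof.
move=> nm; rewrite /cj mulqs scalemul mulconj.
by apply: quat_eq; cbn [q0 q1 q2 q3 qscale qs]; field.
Qed.
Lemma qscale_comp c d (x : quat F) : qscale c (qscale d x) = qscale (c * d) x.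
Proof. by apply: quat_eq; cbn; rewrite mulrA. Qed.
Lemma conj_scale c (x : quat F) : qconj (qscale c x) = qscale c (qconj x).
Proof. apply: quat_eq; cbn; ring. Qed.
Lemma qscale_eq c d (x : quat F) : c = d -> qscale c x = qscale d x. Proof. by move->. Qed.
Lemma cj_comp m1 m2 y : nr m1 != 0 -> nr m2 != 0 -> cj (mul m1 m2) y = cj m1 (cj m2 y).
Proof.
move=> n1 n2; rewrite /cj nrM conjM mulscale scalemul qscale_comp !qassoc.
by apply: qscale_eq; rewrite invfM mulrC.
Qed.
Lemma cj_scalar m c y : c != 0 -> nr m != 0 -> cj (qscale c m) y = cj m y.
Proof.
move=> nc nm; rewrite /cj nr_scale conj_scale mulscale !scalemul !qscale_comp.
by apply: qscale_eq; field; nz.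
Qed.
Lemma cj_qsc c y : c != 0 -> cj (qs c) y = y.
Proof.
move=> nc; rewrite /cj nrE; apply: quat_eq; rewrite ?qmulE; cbn [q0 q1 q2 q3 qconj qscale qs].
all: field; nz.
Qed.
Lemma cj_inv m y : nr m != 0 -> cj (qconj m) (cj m y) = y.
Proof. by move=> nm; rewrite -cj_comp ?nr_conj // conjmul cj_qsc. Qed.

Lemma inOc_add y z : inOc y -> inOc z -> inOc (qadd y z).
Proof.
case=> [h0 h2 h1 h3] [k0 k2 k1 k3]; split; cbn [q0 q1 q2 q3 qadd]; try exact: vintD.
  by rewrite (_ : _ / _ = (q1 y - pi * a * q2 y) / (K * K * L * P1) + (q1 z - pi * a * q2 z) / (K * K * L * P1)); [apply: vintD|field; nz].
by rewrite (_ : _ / _ = (q3 y - b * q2 y) / (K * L * P1) + (q3 z - b * q2 z) / (K * L * P1)); [apply: vintD|field; nz].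
Qed.
Lemma inOc_scale c y : vint v c -> inOc y -> inOc (qscale c y).
Proof.
move=> ic [h0 h2 h1 h3]; split; cbn [q0 q1 q2 q3 qscale]; try exact: vintM.
  by rewrite (_ : _ / _ = c * ((q1 y - pi * a * q2 y) / (K * K * L * P1))); [apply: vintM|field; nz].
by rewrite (_ : _ / _ = c * ((q3 y - b * q2 y) / (K * L * P1))); [apply: vintM|field; nz].
Qed.
Lemma inOc_qs c : vint v c -> inOc (qs c).
Proof. by move=> ic; split; cbn; rewrite ?mulr0 ?subr0 ?mul0r //; left. Qed.
Lemma inOc_decomp y : inOc y -> y = qadd (qadd (qs (q0 y + q2 y * (pi * a) * (2%:R)^-1)) (qscale (q2 y) de))
  (qadd (qscale ((q1 y - pi * a * q2 y) / (K * K * L * P1)) e2) (qscale ((q3 y - b * q2 y) / (K * L * P1)) e3)).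
Proof.
move=> _; apply: quat_eq; rewrite /de /e2 /e3; cbn [q0 q1 q2 q3 qadd qscale qs]; field; nz.
Qed.
Lemma inOc_cj m : nr m != 0 -> inOc (cj m de) -> inOc (cj m e2) -> inOc (cj m e3) ->
  forall y, inOc y -> inOc (cj m y).
Proof.
move=> nm hd h2 h3 y hy; case: (hy) => [i0 i2 i1 i3].
rewrite (inOc_decomp hy) !cj_add !cj_scale cj_qs //.
apply: inOc_add; apply: inOc_add; try (apply: inOc_scale; assumption).
apply: inOc_qs; apply: vintD => //; apply: vintM; [apply: vintM => //; apply: vintM => //; exact: vint_pi| exact: vint_half].
Qed.

Lemma vdich x y : x != 0 -> y != 0 -> vint v (y / x) \/ vmax v (x / y).
Proof.
move=> nx ny; have ex : v (y / x) = v y - v x by rewrite vM ?invr_neq0 // vV.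
have ey : v (x / y) = v x - v y by rewrite vM ?invr_neq0 // vV.
have [h|h] := lerP 0 (v y - v x); first by left; right; rewrite ex.
by right; right; rewrite ey; lia.
Qed.

Lemma nr_mM A B : nr (mM A B) = A ^+ 2 + B ^+ 2 * (pi * UU).
Proof. rewrite nrE qmulE /mM; cbn [q0 q1 q2 q3 qconj]; field; nz. Qed.
Lemma nNp : pi * UU != 0. Proof. by rewrite mulf_neq0 ?Hpi.1 ?nUU. Qed.
Lemma vUU : v UU = 0. Proof. by case: uUU. Qed.

Lemma mM_nz A B : (A != 0) \/ (B != 0) -> A ^+ 2 + B ^+ 2 * (pi * UU) != 0.
Proof.
have [->|nB] := eqVneq B 0.
  by case=> // nA; rewrite expr0n mul0r addr0 expf_neq0.
move=> _; apply/negP => /eqP E.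
have E' : (A / B) ^+ 2 = - (pi * UU).
  apply/eqP; rewrite -subr_eq0 opprK.
  rewrite (_ : (A / B) ^+ 2 + pi * UU = (B ^+ 2)^-1 * (A ^+ 2 + B ^+ 2 * (pi * UU))); first by rewrite E mulr0.
  by field; nz.
have [A0|nA] := eqVneq A 0.
  by move: E'; rewrite A0 mul0r expr0n /= => /eqP; rewrite eq_sym oppr_eq0 (negbTE nNp).
have nAB : A / B != 0 by rewrite mulf_neq0 ?invr_neq0.
have := congr1 v E'; rewrite vN vM ?Hpi.1 ?nUU // vUU Hpi.2 vX //; lia.
Qed.
Lemma nr_mM_nz A B : (A != 0) \/ (B != 0) -> nr (mM A B) != 0.
Proof. by move=> h; rewrite nr_mM; apply: mM_nz. Qed.

Lemma conj_mM A B : qconj (mM A B) = mM A (- B).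
Proof. apply: quat_eq; rewrite /mM; cbn [q0 q1 q2 q3 qconj]; field; nz. Qed.

Lemma de_nz : nr de != 0. Proof. by rewrite nr_de nNp. Qed.
Lemma ff_nz : nr ff != 0.
Proof. by rewrite nr_ff mulf_neq0 ?expf_neq0 ?Hpi.1 ?nffD. Qed.
Lemma oo_nz t : vint v t -> nr (oo t) != 0.
Proof. by move=> it; rewrite nr_oo nooD. Qed.

Lemma trq_ff : trq ff = 0.
Proof. rewrite /trq /ff; cbn; field; nz. Qed.
Lemma trq_de : trq de = 0.
Proof. rewrite /trq /de; cbn; field; nz. Qed.

Lemma mM_E A B : mM A B = qadd (qs A) (qscale B de).
Proof. by apply: quat_eq; rewrite /mM /de; cbn; field; nz. Qed.
Lemma oo_mM t : oo t = mM 1 t.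
Proof. by apply: quat_eq; rewrite /mM /oo; cbn; field; nz. Qed.
Lemma mul_addr x y z : mul x (qadd y z) = qadd (mul x y) (mul x z).
Proof. qring. Qed.

Lemma mM_normal A B : (A != 0) \/ (B != 0) -> forall y, inOc y -> inOc (cj (mM A B) y).
Proof.
move=> nAB y hy.
have [B0|nB] := eqVneq B 0.
  have nA : A != 0 by case: nAB => //; rewrite B0 eqxx.
  have -> : mM A B = qs A by apply: quat_eq; rewrite /mM B0; cbn; ring.
  by rewrite cj_qsc.
have [A0|nA] := eqVneq A 0.
  have -> : mM A B = qscale B de by apply: quat_eq; rewrite /mM /de A0; cbn; ring.
  rewrite cj_scalar ?de_nz //.
  by apply: (inOc_cj de_nz cj_de_de cj_de_e2 cj_de_e3).
case: (vdich nA nB) => [it|mt].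
  have -> : mM A B = qscale A (oo (B / A)).
    by apply: quat_eq; rewrite /mM /oo; cbn; field; nz.
  rewrite cj_scalar ?oo_nz //.
  exact: (inOc_cj (oo_nz it) (cj_oo_de it) (cj_oo_e2 it) (cj_oo_e3 it)).
pose t := - (A / B / pi) * UU^-1.
have it : vint v t.
  by apply: vintM; [apply: vintN; apply/vmaxE | exact: iUUV].
have -> : mM A B = qscale B (mul de (oo t)).
  rewrite oo_mM [mM 1 t]mM_E mul_addr mulqs mulscale sq0 ?trq_de // nr_de scale1q.
  rewrite /t; move: (UU) nUU => u nu.
  by apply: quat_eq; rewrite /mM /de; cbn [q0 q1 q2 q3 qscale qadd qs]; field; nz.
rewrite cj_scalar ?nrM ?mulf_neq0 ?de_nz ?oo_nz // cj_comp ?de_nz ?oo_nz //.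
apply: (inOc_cj de_nz cj_de_de cj_de_e2 cj_de_e3).
exact: (inOc_cj (oo_nz it) (cj_oo_de it) (cj_oo_e2 it) (cj_oo_e3 it)).
Qed.

Lemma ff_normal y : inOc y -> inOc (cj ff y).
Proof. exact: (inOc_cj ff_nz cj_ff_de cj_ff_e2 cj_ff_e3). Qed.

Lemma normal_of g : nr g != 0 -> (forall y, inOc y -> inOc (cj g y)) ->
  (forall y, inOc y -> inOc (cj (qconj g) y)) ->
  exists h, [/\ mul g h = qone F, mul h g = qone F & forall y, inOc y <-> inOc (mul (mul g y) h)].
Proof.
move=> ng h1 h2; exists (qscale (nr g)^-1 (qconj g)); split.
- rewrite mulscale mulconj qoneE; apply: quat_eq; cbn; field; nz.
- rewrite scalemul conjmul qoneE; apply: quat_eq; cbn; field; nz.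
move=> y; rewrite mulscale -/(cj g y); split; first exact: h1.
by move=> hy; rewrite -(cj_inv y ng); apply: h2.
Qed.

Lemma comm_M m : mul m de = mul de m -> m = mM (q0 m + q2 m * (pi * a) * (2%:R)^-1) (q2 m).
Proof.
move=> H.
have h3' : pi * (q3 m - b * q2 m) = 0.
  have -> : pi * (q3 m - b * q2 m) = q0 (mul de m) - q0 (mul m de) by rewrite !qmulE /de; cbn; ring.
  by rewrite H subrr.
have h3 : q3 m = b * q2 m.
  by apply/eqP; rewrite -subr_eq0; move: h3'; move/eqP; rewrite mulf_eq0 (negbTE Hpi.1) /= => /eqP ->.
have hA : (1 + 2%:R * b * e) * (pi * a * q2 m - q1 m) = 0.
  have -> : (1 + 2%:R * b * e) * (pi * a * q2 m - q1 m) = q2 (mul m de) - q2 (mul de m).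
    by rewrite !qmulE /de; cbn; rewrite h3; ring.
  by rewrite H subrr.
have hB : (2%:R + b) * (q1 m - pi * a * q2 m) = 0.
  have -> : (2%:R + b) * (q1 m - pi * a * q2 m) = q3 (mul m de) - q3 (mul de m).
    by rewrite !qmulE /de; cbn; rewrite h3; ring.
  by rewrite H subrr.
have h1 : q1 m = pi * a * q2 m.
  move: hA hB => /eqP; rewrite mulf_eq0 => /orP[/eqP hA|]; last first.
    by rewrite subr_eq0 => /eqP ->.
  move=> /eqP; rewrite mulf_eq0 => /orP[/eqP hB|]; last by rewrite subr_eq0 => /eqP.
  exfalso; case: ud => nd _; move/eqP: nd; apply.
  rewrite (_ : 1 - 4%:R * e = (1 + 2%:R * b * e) - 2%:R * e * (2%:R + b)); last by ring.
  by rewrite hA hB mulr0 subrr.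
apply: quat_eq; rewrite /mM; cbn [q0 q1 q2 q3]; rewrite ?h1 ?h3.
all: field; nz.
Qed.

Definition Sset c := exists A B, (A != 0 \/ B != 0) /\ c = A ^+ 2 + B ^+ 2 * (pi * UU).

Lemma S_nz c : Sset c -> c != 0.
Proof. by case=> A [B [nAB ->]]; apply: mM_nz. Qed.
Lemma S_sq w : w != 0 -> Sset (w ^+ 2).
Proof. by move=> nw; exists w, 0; split; [left|rewrite expr0n mul0r addr0]. Qed.
Lemma S_Np : Sset (pi * UU).
Proof. by exists 0, 1; split; [right; exact: oner_neq0|rewrite expr0n expr1n mul1r add0r]. Qed.
Lemma S_mul c d : Sset c -> Sset d -> Sset (c * d).
Proof.
move=> hc hd; have nc := S_nz hc; have nd := S_nz hd.
case: hc => A1 [B1 [_ ec]]; case: hd => A2 [B2 [_ ed]].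
exists (A1 * A2 - B1 * B2 * (pi * UU)), (A1 * B2 + A2 * B1); split; last by rewrite ec ed; ring.
have [h1|h1] := eqVneq (A1 * A2 - B1 * B2 * (pi * UU)) 0; last by left.
have [h2|h2] := eqVneq (A1 * B2 + A2 * B1) 0; last by right.
exfalso; move: (mulf_neq0 nc nd); rewrite ec ed.
rewrite (_ : (A1 ^+ 2 + B1 ^+ 2 * (pi * UU)) * (A2 ^+ 2 + B2 ^+ 2 * (pi * UU)) = (A1 * A2 - B1 * B2 * (pi * UU)) ^+ 2 + (A1 * B2 + A2 * B1) ^+ 2 * (pi * UU)); last by ring.
by rewrite h1 h2 expr0n mul0r addr0 eqxx.
Qed.
Lemma S_inv c : Sset c -> Sset c^-1.
Proof.
move=> hc; have nc := S_nz hc; case: hc => A [B [nAB ec]].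
exists (A / c), (- B / c); split.
  by case: nAB => h; [left|right]; rewrite mulf_neq0 ?invr_eq0 ?oppr_eq0.
rewrite (_ : (A / c) ^+ 2 + (- B / c) ^+ 2 * (pi * UU) = (A ^+ 2 + B ^+ 2 * (pi * UU)) / c ^+ 2); last by field; nz.
by rewrite -ec; field; nz.
Qed.
Lemma S_div c d : Sset (c * d) -> Sset d -> Sset c.
Proof.
move=> hcd hd; have nd := S_nz hd.
by rewrite (_ : c = (c * d) * d^-1); [apply: S_mul => //; apply: S_inv|field; nz].
Qed.

Lemma mul_addl x y z : mul (qadd x y) z = qadd (mul x z) (mul y z). Proof. qring. Qed.
Lemma qaddC (x y : quat F) : qadd x y = qadd y x. Proof. qring. Qed.
Lemma mulqone x : mul x (qone F) = x. Proof. by rewrite qoneE mulqs scale1q. Qed.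
Lemma qonemul x : mul (qone F) x = x. Proof. by rewrite qoneE qsmul scale1q. Qed.
Lemma nr_qone : nr (qone F) = 1. Proof. rewrite nrE qmulE; cbn; ring. Qed.
Lemma trq_qone_mul x : trq (mul (qone F) x) = trq x. Proof. by rewrite qonemul. Qed.
Lemma scaleN1K (x y : quat F) : qscale (-1) x = qscale (-1) y -> x = y.
Proof. by move=> h; have := congr1 (qscale (-1)) h; rewrite !qscale_comp mulrNN mulr1 !scale1q. Qed.
Lemma ff_anti : mul ff de = qscale (-1) (mul de ff).
Proof. apply: quat_eq; rewrite !qmulE /ff /de; cbn [q0 q1 q2 q3 qscale]; field; nz. Qed.
Lemma inOc_de : inOc de.
Proof.
split; rewrite /de; cbn [q0 q1 q2 q3].
- by apply: vintM; [apply: vintN; apply: vintM => //; exact: vint_pi|exact: vint_half].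
- exact: vint1.
- by rewrite mulr1 subrr mul0r; left.
- by rewrite mulr1 subrr mul0r; left.
Qed.

Definition zc c1 c2 c3 := Quat (- (pi * a * c1 + K * K * L * P1 * c2) * (2%:R)^-1)
  (pi * a * c1 + K * K * L * P1 * c2) c1 (b * c1 + K * L * P1 * c3).
Definition G1f c1 c2 c3 := - (1 * P1 * c1 * c3) - (1 * (2%:R)^-1 ^+ 2 * P1 ^+ 2 * c2 ^+ 2 * K ^+ 2) - (1 * e * P1 ^+ 2 * c3 ^+ 2 * K * L) + (1 * e * P1 ^+ 2 * c2 ^+ 2 * K ^+ 2) - (2%:R * b * e * P1 * c1 * c3) - (1 * (2%:R)^-1 ^+ 1 * a * P1 * c1 * c2 * K) + (2%:R * a * e * P1 * c1 * c2 * K).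
Definition G2f (c1 c2 c3 : F) := - (1 * P1 * c3) - (2%:R * b * e * P1 * c3) - (1 * (2%:R)^-1 ^+ 1 * a * P1 * c2 * K) + (2%:R * a * e * P1 * c2 * K).
Lemma I1 c1 c2 c3 : nr (zc c1 c2 c3) = c1 ^+ 2 * (pi * UU) + pi ^+ 2 * G1f c1 c2 c3.
Proof. rewrite nrE qmulE /zc /G1f; cbn [q0 q1 q2 q3 qconj]; rewrite HKL; field; nz. Qed.
Lemma I2 c1 c2 c3 : nr (qadd de (zc c1 c2 c3)) = nr (zc c1 c2 c3) + pi * UU + 2%:R * c1 * (pi * UU) + pi ^+ 2 * G2f c1 c2 c3.
Proof. rewrite !nrE !qmulE /zc /de /G2f; cbn [q0 q1 q2 q3 qconj qadd]; rewrite HKL; field; nz. Qed.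
Lemma I3 c1 c2 c3 : nr (qadd de (qscale (-1) (zc c1 c2 c3))) = nr (zc c1 c2 c3) + pi * UU - 2%:R * c1 * (pi * UU) - pi ^+ 2 * G2f c1 c2 c3.
Proof. rewrite !nrE !qmulE /zc /de /G2f; cbn [q0 q1 q2 q3 qconj qadd qscale]; rewrite HKL; field; nz. Qed.
Lemma iG1 c1 c2 c3 : vint v c1 -> vint v c2 -> vint v c3 -> vint v (G1f c1 c2 c3).
Proof. by move=> *; rewrite /G1f; vint_tac. Qed.
Lemma iG2 c1 c2 c3 : vint v c1 -> vint v c2 -> vint v c3 -> vint v (G2f c1 c2 c3).
Proof. by move=> *; rewrite /G2f; vint_tac. Qed.

Lemma conj_step g z k : nr g != 0 -> nr k != 0 -> mul z g = mul g de -> mul k de = mul z k ->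
  trq z = 0 -> Sset (nr k * nr g).
Proof.
move=> ng nk zg kz tz.
have hc : mul (qconj k) z = mul de (qconj k).
  apply: scaleN1K.
  have := congr1 (@qconj F) kz; rewrite !conjM (conj0 trq_de) (conj0 tz) scalemul mulscale.
  by move=> E; rewrite E.
have comm : mul (mul (qconj k) g) de = mul de (mul (qconj k) g).
  by rewrite qassoc -zg -qassoc hc qassoc.
have em := comm_M comm.
move: em; set m' := mul (qconj k) g => em.
have nm : nr m' = nr k * nr g by rewrite /m' nrM nr_conj.
move: em; set A := q0 m' + q2 m' * (pi * a) * (2%:R)^-1; set B := q2 m' => em.
have nm2 : nr k * nr g = A ^+ 2 + B ^+ 2 * (pi * UU) by rewrite -nm em nr_mM.
exists A, B; split => //.
have [A0|] := eqVneq A 0; last by left.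
have [B0|] := eqVneq B 0; last by right.
by exfalso; move: (mulf_neq0 nk ng); rewrite nm2 A0 B0 expr0n mul0r addr0 eqxx.
Qed.

Lemma sq_near1 W : vmax v (W - 1) -> Sset W.
Proof.
move=> h; have [w hw] := hensel h.
have uW : vunit v W by rewrite (_ : W = 1 + (W - 1)); [apply: unit_add_max => //; exact: vunit1|ring].
case: uW => nW _; rewrite -hw; apply: S_sq; apply/negP => /eqP w0.
by move: nW; rewrite -hw w0 expr0n eqxx.
Qed.

Lemma upper g h : mul g h = qone F -> mul h g = qone F -> (forall y, inOc y -> inOc (mul (mul g y) h)) ->
  Sset (nr ff) -> Sset (nr g).
Proof.
move=> gh hg hn Sff.
have ng : nr g != 0.
  apply/negP => /eqP g0; move: (congr1 nr gh); rewrite nrM nr_qone g0 mul0r => /eqP.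
  by rewrite eq_sym oner_eq0.
have hz : inOc (mul (mul g de) h) := hn _ inOc_de.
have tz : trq (mul (mul g de) h) = 0 by rewrite trC -qassoc hg qonemul trq_de.
have nz : nr (mul (mul g de) h) = pi * UU by rewrite !nrM nr_de mulrAC -nrM gh nr_qone mul1r.
have zg : mul (mul (mul g de) h) g = mul g de by rewrite qassoc hg mulqone.
move: hz tz nz zg; set z := mul (mul g de) h => hz tz nz zg.
case: hz => [i0 i2 i1 i3].
set c1 := q2 z; set c2 := (q1 z - pi * a * c1) / (K * K * L * P1); set c3 := (q3 z - b * c1) / (K * L * P1).
have ez : z = zc c1 c2 c3.
  move: tz; rewrite /trq => tz; have h1 : q1 z = - (2%:R * q0 z) by apply/eqP; rewrite -addr_eq0 addrC tz.
  apply: quat_eq; rewrite /zc /c2 /c3 /c1; cbn [q0 q1 q2 q3]; rewrite ?h1; field; nz.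
have E1 := I1 c1 c2 c3; rewrite -ez nz in E1.
have E2 := I2 c1 c2 c3; rewrite -ez nz in E2.
have E3 := I3 c1 c2 c3; rewrite -ez nz in E3.
have iG1' := iG1 i2 i1 i3; have iG2' := iG2 i2 i1 i3.
move: (G1f c1 c2 c3) (G2f c1 c2 c3) iG1' iG2' E1 E2 E3 => G1 G2 iG1' iG2' E1 E2 E3.
have iu := iUUV; have nu := nUU.
have key : vmax v ((1 - c1) * (1 + c1)).
  have -> : (1 - c1) * (1 + c1) = pi * (G1 / UU).
    move: (UU) iu nu E1 => u iu nu E1.
    have -> : (1 - c1) * (1 + c1) = (pi * u - c1 ^+ 2 * (pi * u)) / (pi * u) by field; nz.
    rewrite {1}E1; field; nz.
  by apply: vmax_pi; apply: vintM.
case/max_prime: key; [exact: vintB vint1 i2|exact: vintD vint1 i2|move=> m1|move=> m1].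
- pose k := qadd de z.
  have Sk : Sset (nr k).
    rewrite /k E2.
    have -> : pi * UU + pi * UU + 2%:R * c1 * (pi * UU) + pi ^+ 2 * G2 =
              (pi * UU) * (((2%:R + 2%:R * c1 + pi * (G2 / UU)) / 4%:R)) * 2%:R ^+ 2.
      move: (UU) nu => u nu; field; nz.
    apply: S_mul; last exact: S_sq two_neq0.
    apply: S_mul; first exact: S_Np.
    apply: sq_near1.
    have -> : (2%:R + 2%:R * c1 + pi * (G2 / UU)) / 4%:R - 1 = - ((1 - c1) / 2%:R) + pi * (G2 / UU / 4%:R).
      move: (UU) nu => u nu; field; nz.
    apply: vmaxD; first by apply: vmaxN; rewrite mulrC; apply: vmaxM => //; exact: vint_half.
    apply: vmax_pi; apply: vintM; first exact: vintM.
    by rewrite (_ : (4%:R : F)^-1 = (2%:R)^-1 * (2%:R)^-1); [apply: vintM; exact: vint_half|field; nz].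
  have nk := S_nz Sk.
  have kz : mul k de = mul z k.
    by rewrite /k mul_addl mul_addr (sq0 trq_de) (sq0 tz) nz nr_de qaddC.
  by apply: (S_div _ Sk); rewrite mulrC; exact: (conj_step ng nk zg kz tz).
- pose dz := qadd de (qscale (-1) z).
  pose k := mul dz ff.
  have Sk : Sset (nr k).
    rewrite /k nrM; apply: S_mul => //.
    rewrite /dz E3.
    have -> : pi * UU + pi * UU - 2%:R * c1 * (pi * UU) - pi ^+ 2 * G2 =
              (pi * UU) * (((2%:R - 2%:R * c1 - pi * (G2 / UU)) / 4%:R)) * 2%:R ^+ 2.
      move: (UU) nu => u nu; field; nz.
    apply: S_mul; last exact: S_sq two_neq0.
    apply: S_mul; first exact: S_Np.
    apply: sq_near1.
    have -> : (2%:R - 2%:R * c1 - pi * (G2 / UU)) / 4%:R - 1 = - ((1 + c1) / 2%:R) - pi * (G2 / UU / 4%:R).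
      move: (UU) nu => u nu; field; nz.
    apply: vmaxD; first by apply: vmaxN; rewrite mulrC; apply: vmaxM => //; exact: vint_half.
    apply: vmaxN; apply: vmax_pi; apply: vintM; first exact: vintM.
    by rewrite (_ : (4%:R : F)^-1 = (2%:R)^-1 * (2%:R)^-1); [apply: vintM; exact: vint_half|field; nz].
  have nk := S_nz Sk.
  have kz : mul k de = mul z k.
    have e1 : qscale (-1) (mul dz de) = mul z dz.
      rewrite /dz mul_addl mul_addr scalemul mulscale (sq0 trq_de) (sq0 tz) nz nr_de.
      apply: quat_eq; cbn [q0 q1 q2 q3 qadd qscale qs]; ring.
    by rewrite /k qassoc ff_anti mulscale -qassoc -scalemul e1 qassoc.
  by apply: (S_div _ Sk); rewrite mulrC; exact: (conj_step ng nk zg kz tz).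
Qed.

Lemma vunit_v x : vunit v x -> v x = 0. Proof. by case. Qed.

Lemma S_unit_sqmod c : Sset c -> vunit v c -> sqmod c.
Proof.
case=> A [B [nAB ec]] uc.
have [B0|nB] := eqVneq B 0.
  move: uc; rewrite ec B0 expr0n mul0r addr0 => uA2.
  exists A; split; first exact: vunit_int (vunit_sq uA2).
  by rewrite subrr; left.
have vc := vunit_v uc; have nc : c != 0 by case: uc.
have [A0|nA] := eqVneq A 0.
  exfalso; move: vc; rewrite ec A0 expr0n add0r vM ?expf_neq0 ?nNp // vX // vM ?Hpi.1 ?nUU // vUU Hpi.2; lia.
case: (vdich nA nB) => [it|mt].
  have eu : c = A ^+ 2 * (1 + pi * ((B / A) ^+ 2 * UU)) by rewrite ec; field; nz.
  have uu : vunit v (1 + pi * ((B / A) ^+ 2 * UU)).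
    apply: unit_add_max; first exact: vunit1.
    by apply: vmax_pi; apply: vintM; [exact: vintX|exact: vunit_int uUU].
  have nu : 1 + pi * ((B / A) ^+ 2 * UU) != 0 by case: uu.
  have uA : vunit v A.
    split => //; move: vc; rewrite eu vM ?expf_neq0 // (vunit_v uu) vX //; lia.
  exists A; split; first exact: vunit_int.
  rewrite eu (_ : A ^+ 2 * (1 + pi * ((B / A) ^+ 2 * UU)) - A ^+ 2 = pi * (B ^+ 2 * UU)); last by field; nz.
  by apply: vmax_pi; apply: vintM; [apply: vintX; rewrite (_ : B = (B / A) * A); [apply: vintM => //; exact: vunit_int|field; nz] | exact: vunit_int uUU].
exfalso.
have eu : c = B ^+ 2 * pi * (UU + (A / B) * ((A / B) / pi)) by rewrite ec; field; nz.
have uu : vunit v (UU + (A / B) * ((A / B) / pi)).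
  apply: unit_add_max; first exact: uUU.
  by rewrite mulrC; apply: vmaxM => //; apply/vmaxE.
have nu : UU + (A / B) * ((A / B) / pi) != 0 by case: uu.
move: vc; rewrite eu vM ?mulf_neq0 ?expf_neq0 ?Hpi.1 // vM ?expf_neq0 ?Hpi.1 // (vunit_v uu) vX // Hpi.2; lia.
Qed.

Lemma sqmod_mul x y : vint v x -> sqmod x -> sqmod y -> sqmod (x * y).
Proof.
move=> ix [z1 [i1 m1]] [z2 [i2 m2]]; exists (z1 * z2); split; first exact: vintM.
rewrite (_ : x * y - (z1 * z2) ^+ 2 = x * (y - z2 ^+ 2) + z2 ^+ 2 * (x - z1 ^+ 2)); last by ring.
by apply: vmaxD; apply: vmaxM => //; apply: vintX.
Qed.
Lemma sqmod_sq w : vint v w -> sqmod (w ^+ 2).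
Proof. by move=> iw; exists w; split => //; rewrite subrr; left. Qed.

Lemma nr_ff' : nr ff = pi ^+ 2 * (dd * UU * Nw). Proof. exact: nr_ff. Qed.

Lemma cond_ff w : w ^+ 2 = - dd -> Sset (nr ff).
Proof.
move=> hw; have nw : w != 0.
  by apply/negP => /eqP w0; move: udd hw => [nd _]; rewrite w0 expr0n => /eqP; rewrite eq_sym oppr_eq0 (negbTE nd).
have nNw : Nw != 0 by case: uNw.
rewrite nr_ff (_ : pi ^+ 2 * (dd * UU * Nw) = (pi ^+ 2 * w ^+ 2 * Nw ^+ 2) * (1 + pi * (a ^+ 2 * dd / Nw))); last first.
  by rewrite hw; field; nz.
apply: S_mul; first by rewrite -!exprMn; apply: S_sq; rewrite !mulf_neq0 ?Hpi.1.
apply: sq_near1; rewrite addrAC subrr add0r; apply: vmax_pi; apply: vintM; first apply: vintM => //; first exact: vintX.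
  exact: vunit_int udd.
exact: vunitV_int.
Qed.

Lemma notcond_ff : Sset (nr ff) -> sqmod (- dd).
Proof.
move=> Sff; have nNw : Nw != 0 by case: uNw.
have SX : Sset (dd * UU * Nw).
  apply: (S_div (d := pi ^+ 2)); first by rewrite mulrC -nr_ff.
  exact: S_sq (proj1 Hpi).
have uX : vunit v (dd * UU * Nw) by apply: vunitM => //; apply: vunitM; [exact: udd|exact: uUU].
have [z [iz mz]] := S_unit_sqmod SX uX.
exists (z / Nw); split; first by apply: vintM => //; exact: vunitV_int.
rewrite (_ : - dd - (z / Nw) ^+ 2 = (dd * UU * Nw - z ^+ 2) * (Nw ^+ 2)^-1 + pi * (a ^+ 2 * dd ^+ 2 / Nw)); last first.
  by field; nz.
apply: vmaxD; first by rewrite mulrC; apply: vmaxM => //; apply: vunitV_int; rewrite expr2; exact: vunitM.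
apply: vmax_pi; apply: vintM; last exact: vunitV_int.
by apply: vintM; [exact: vintX| apply: vintX; exact: vunit_int udd].
Qed.

Definition NrN c := exists g, (exists h, [/\ mul g h = qone F, mul h g = qone F &
  forall y, inOc y <-> inOc (mul (mul g y) h)]) /\ c = nr g.

Lemma lower_M c : Sset c -> NrN c.
Proof.
case=> A [B [nAB ->]]; exists (mM A B); split; last by rewrite nr_mM.
apply: normal_of; first exact: nr_mM_nz.
  exact: mM_normal.
rewrite conj_mM; apply: mM_normal.
by case: nAB => h; [left|right; rewrite oppr_eq0].
Qed.

Lemma ff_NrN : NrN (nr ff).
Proof.
exists ff; split => //; apply: normal_of; first exact: ff_nz.
  exact: ff_normal.
rewrite (conj0 trq_ff) => y hy; rewrite cj_scalar ?ff_nz ?oppr_eq0 ?oner_eq0 //; exact: ff_normal.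
Qed.

Lemma upper' c : NrN c -> Sset (nr ff) -> Sset c.
Proof. by case=> g [[h [gh hg hn]] ->] Sff; apply: (upper gh hg) => // y /hn. Qed.

Lemma inO_iff n (Hr : pi ^+ n./2 = K * K * L * P1) (Hs : pi ^+ (n.-1)./2 = K * L * P1) y :
  inO v pi (pi * a) b n y <-> inOc y.
Proof.
rewrite /inO Hr Hs; split.
  case=> c0 [c1 [c2 [c3 [[i0 i1 i2 i3] ->]]]].
  split; rewrite /xab /qx1 /qx3; cbn [q0 q1 q2 q3 qadd qscale qs].
  - by rewrite !mulr0 !addr0.
  - by rewrite !mulr0 !addr0 mulr1 add0r.
  - by rewrite (_ : _ / _ = c2); [|field; nz].
  - by rewrite (_ : _ / _ = c3); [|field; nz].
case=> i0 i2 i1 i3.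
exists (q0 y), (q2 y), ((q1 y - pi * a * q2 y) / (K * K * L * P1)), ((q3 y - b * q2 y) / (K * L * P1)).
split => //; apply: quat_eq; rewrite /xab /qx1 /qx3; cbn [q0 q1 q2 q3 qadd qscale qs]; field; nz.
Qed.

Lemma NmM_eq A B : NmM e pi (pi * a) b A B = (A + B * (pi * a) * (2%:R)^-1) ^+ 2 + B ^+ 2 * (pi * UU).
Proof. rewrite /NmM /Trd nrE qmulE /xab; cbn [q0 q1 q2 q3 qconj qadd]; field; nz. Qed.

Lemma NmM_S c : NmMunits e pi (pi * a) b c <-> Sset c.
Proof.
split.
  case=> A [B [nAB ->]]; rewrite NmM_eq; exists (A + B * (pi * a) * (2%:R)^-1), B; split => //.
  have [B0|] := eqVneq B 0; last by right.
  by left; case: nAB; rewrite B0 ?eqxx // mul0r mul0r addr0.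
case=> A [B [nAB ->]]; exists (A - B * (pi * a) * (2%:R)^-1), B; split.
  have [B0|] := eqVneq B 0; last by right.
  by left; case: nAB; rewrite B0 ?eqxx // mul0r mul0r subr0.
by rewrite NmM_eq; congr (_ + _); congr (_ ^+ 2); ring.
Qed.

Lemma NrN_iff n (Hr : pi ^+ n./2 = K * K * L * P1) (Hs : pi ^+ (n.-1)./2 = K * L * P1) c :
  NrNormalizer v e pi (pi * a) b n c <-> NrN c.
Proof.
split; case=> g [[h [gh hg hn]] ->]; exists g; split => //; exists h; split => // y.
  by rewrite -!(inO_iff Hr Hs).
by rewrite !(inO_iff Hr Hs).
Qed.

Lemma main_core n (Hr : pi ^+ n./2 = K * K * L * P1) (Hs : pi ^+ (n.-1)./2 = K * L * P1)
  (split : bool) (Hsplit : if split then e = 0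
            else [/\ vunit v e, vunit v (1 - 4%:R * e) &
                     ~ (exists w : F, vunit v w /\ w ^+ 2 = 1 - 4%:R * e)]) :
  (forall c : F, NrNormalizer v e pi (pi * a) b n c <-> NmMunits e pi (pi * a) b c)
  <-> ((split /\ minus1_sq_residue v) \/ (~~ split /\ ~ minus1_sq_residue v)).
Proof.
have ddE : - dd = - (1 - 4%:R * e) * ((2%:R)^-1) ^+ 2 by field; nz.
have m1E : minus1_sq_residue v <-> sqmod (-1).
  split; case=> u [iu mu]; exists u; split => //.
    by rewrite (_ : -1 - u ^+ 2 = - (u ^+ 2 + 1)); [apply: vmaxN|ring].
  by rewrite (_ : u ^+ 2 + 1 = - (-1 - u ^+ 2)); [apply: vmaxN|ring].
have u1 : vunit v (-1 : F) by apply: vunitN; exact: vunit1.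
split.
- move=> H.
  have Sff : Sset (nr ff) by apply/NmM_S/H/(NrN_iff Hr Hs); exact: ff_NrN.
  have sm := notcond_ff Sff.
  have sm' : sqmod (- (1 - 4%:R * e)).
    rewrite (_ : - (1 - 4%:R * e) = 2%:R ^+ 2 * - dd); last by rewrite ddE; field; nz.
    by apply: sqmod_mul; [apply: vintX; exact: vintn | apply: sqmod_sq; exact: vintn|].
  case: split Hsplit => Hsplit.
    by left; split => //; apply/m1E; move: sm'; rewrite Hsplit mulr0 subr0.
  right; split => // /m1E m1; case: Hsplit => ue _ nsq; apply: nsq.
  apply: sqmod_unit => //.
  rewrite (_ : 1 - 4%:R * e = (-1) * (- (1 - 4%:R * e))); last by ring.
  by apply: sqmod_mul => //; exact: vunit_int.
- move=> cond c; rewrite (NrN_iff Hr Hs) NmM_S; split; last exact: lower_M.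
  move=> hN; apply: (upper' hN).
  have [w hw] : exists w, w ^+ 2 = - (1 - 4%:R * e).
    case: cond => [[sp /m1E m1]|[sp nm1]].
      move: Hsplit; rewrite sp => ->; rewrite mulr0 subr0.
      by have [w [_ hw]] := sqmod_unit u1 m1; exists w.
    move: Hsplit; rewrite (negbTE sp) => -[ue ud' nsq].
    have nsq' : ~ sqmod (1 - 4%:R * e) by move=> h; apply: nsq; apply: sqmod_unit.
    have := ff_sq u1 ud' (fun h => nm1 (proj2 m1E h)) nsq'.
    rewrite mulN1r => h; have [w [_ hw]] := sqmod_unit (vunitN ud') h; by exists w.
  apply: (cond_ff (w := w * (2%:R)^-1)); rewrite exprMn hw ddE //.
Qed.
End Val.

Theorem lemma3p6 (F : fieldType) (v : F -> int) (HF : nondyadic_local_field v)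
    (pi : F) (Hpi : pi != 0 /\ v pi = 1)
    (split : bool) (eps : F)
    (Heps : if split then eps = 0
            else [/\ vunit v eps, vunit v (1 - 4%:R * eps) &
                     ~ (exists w : F, vunit v w /\ w ^+ 2 = 1 - 4%:R * eps)])
    (n : nat) (Hn : (3 <= n)%N) (alpha beta : F)
    (Halpha : vmax v alpha) (Hbeta : vint v beta)
    (Hbeta1 : split -> vunit v (1 + beta)) :
  (forall c : F, NrNormalizer v eps pi alpha beta n c <-> NmMunits eps pi alpha beta c)
  <-> ((split /\ minus1_sq_residue v) \/ (~~ split /\ ~ minus1_sq_residue v)).
Proof.
have [a ia ea] := vmaxP HF Hpi Halpha; subst alpha.
have np := Hpi.1.
have ipi : vint v pi by right; rewrite Hpi.2.
have [ie ud uNw] : [/\ vint v eps, vunit v (1 - 4%:R * eps) & vunit v (1 + beta + beta ^+ 2 * eps)].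
  case: split Heps Hbeta1 => [-> hb|[ue ud' nsq] _].
    split; first by left.
      by rewrite mulr0 subr0; exact: (vunit1 HF Hpi).
    by rewrite mulr0 addr0; apply: hb.
  split => //; first exact: (vunit_int ue).
  exact: (Nw_unit_ram HF Hpi Hbeta (vunit_int ue) ud' nsq).
have s1 : (1 <= (n.-1)./2)%N by lia.
have hr : n./2 = (n.-1)./2 \/ n./2 = ((n.-1)./2).+1 by lia.
have iP1 : vint v (pi ^+ ((n.-1)./2).-1) by apply: (vintX HF Hpi).
have nP1 : pi ^+ ((n.-1)./2).-1 != 0 by rewrite expf_neq0.
have ePs : pi ^+ (n.-1)./2 = pi * pi ^+ ((n.-1)./2).-1 by rewrite -exprS prednK.
have i1 : vint v (1 : F) by right; rewrite (v1 HF Hpi).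
have n1 : (1 : F) != 0 by exact: oner_neq0.
case: hr => hr.
- have HKL : pi = 1 * pi by rewrite mul1r.
  have Hr : pi ^+ n./2 = 1 * 1 * pi * pi ^+ ((n.-1)./2).-1 by rewrite hr ePs !mul1r.
  have Hs : pi ^+ (n.-1)./2 = 1 * pi * pi ^+ ((n.-1)./2).-1 by rewrite ePs mul1r.
  exact: (main_core HF Hpi HKL i1 ipi iP1 ia Hbeta ie n1 np nP1 ud uNw Hr Hs Heps).
- have HKL : pi = pi * 1 by rewrite mulr1.
  have Hr : pi ^+ n./2 = pi * pi * 1 * pi ^+ ((n.-1)./2).-1 by rewrite hr exprS ePs mulr1 mulrA.
  have Hs : pi ^+ (n.-1)./2 = pi * 1 * pi ^+ ((n.-1)./2).-1 by rewrite ePs mulr1.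
  exact: (main_core HF Hpi HKL ipi i1 iP1 ia Hbeta ie np n1 nP1 ud uNw Hr Hs Heps).
Qed.
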